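(* Let $A$ and $B$ be Banach algebras, $\phi\in\Delta(A)$ and $\psi\in\Delta(B)$. Suppose $A$ is unital and $B$ has an idempotent $x_0$ with $\psi(x_0)=1$. If $A\otimes_pB$ is approximately left $\phi\otimes\psi$-biprojective, then $A$ is approximately left $\phi$-biprojective.
   Context: $\Delta(A)$ is the set of characters of $A$. $A\otimes_pB$ is the projective tensor product Banach algebra with product $(a\otimes b)(c\otimes d)=ac\otimes bd$, and $\phi\otimes\psi\in\Delta(A\otimes_pB)$ is determined by $(\phi\otimes\psi)(a\otimes b)=\phi(a)\psi(b)$. For a Banach algebra $C$, $C\otimes_pC$ is a Banach $C$-bimodule via $c\cdot(x\otimes y)=cx\otimes y$, $(x\otimes y)\cdot c=x\otimes yc$, and $\pi_C(x\otimes y)=xy$. For $\theta\in\Delta(C)$, $C$ is approximately left $\theta$-biprojective if there is a net $(\rho_\alpha)$ of bounded linear maps $C\to C\otimes_pC$ such that for all $c,x\in C$: $\|c\cdot\rho_\alpha(x)-\rho_\alpha(cx)\|\to0$, $\|\rho_\alpha(xc)-\theta(c)\rho_\alpha(x)\|\to0$, and $\theta(\pi_C(\rho_\alpha(x)))-\theta(x)\to0$. *)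

(* Defs.v *)
From Stdlib Require Import Reals ClassicalEpsilon.
Open Scope R_scope.
Set Implicit Arguments.

Record Cx : Type := mkCx { Cre : R ; Cim : R }.
Definition Czero : Cx := mkCx 0 0.
Definition Cone : Cx := mkCx 1 0.
Definition Cadd (z w : Cx) : Cx := mkCx (Cre z + Cre w) (Cim z + Cim w).
Definition Copp (z : Cx) : Cx := mkCx (- Cre z) (- Cim z).
Definition Csub (z w : Cx) : Cx := Cadd z (Copp w).
Definition Cmul (z w : Cx) : Cx :=
  mkCx (Cre z * Cre w - Cim z * Cim w) (Cre z * Cim w + Cim z * Cre w).
Definition Cmod (z : Cx) : R := sqrt (Cre z * Cre z + Cim z * Cim z).

Record BanachSpace : Type := mkBS {
  bs_car :> Type;
  bs_zero : bs_car;
  bs_add : bs_car -> bs_car -> bs_car;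
  bs_opp : bs_car -> bs_car;
  bs_scal : Cx -> bs_car -> bs_car;
  bs_norm : bs_car -> R;
  bs_addA : forall x y z, bs_add x (bs_add y z) = bs_add (bs_add x y) z;
  bs_addC : forall x y, bs_add x y = bs_add y x;
  bs_add0 : forall x, bs_add x bs_zero = x;
  bs_addN : forall x, bs_add x (bs_opp x) = bs_zero;
  bs_scalA : forall a b x, bs_scal (Cmul a b) x = bs_scal a (bs_scal b x);
  bs_scal1 : forall x, bs_scal Cone x = x;
  bs_scalDr : forall a x y, bs_scal a (bs_add x y) = bs_add (bs_scal a x) (bs_scal a y);
  bs_scalDl : forall a b x, bs_scal (Cadd a b) x = bs_add (bs_scal a x) (bs_scal b x);
  bs_norm_eq0 : forall x, bs_norm x = 0 -> x = bs_zero;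
  bs_normZ : forall a x, bs_norm (bs_scal a x) = Cmod a * bs_norm x;
  bs_normD : forall x y, bs_norm (bs_add x y) <= bs_norm x + bs_norm y;
  bs_complete : forall u : nat -> bs_car,
    (forall eps, 0 < eps -> exists N, forall n m, (N <= n)%nat -> (N <= m)%nat ->
        bs_norm (bs_add (u n) (bs_opp (u m))) < eps) ->
    exists l, forall eps, 0 < eps -> exists N, forall n, (N <= n)%nat ->
        bs_norm (bs_add (u n) (bs_opp l)) < eps
}.

Arguments bs_zero {_}.
Arguments bs_add {_}.
Arguments bs_opp {_}.
Arguments bs_scal {_}.
Arguments bs_norm {_}.

Definition bs_sub {X : BanachSpace} (x y : X) : X := bs_add x (bs_opp y).

Record BanachAlgebra : Type := mkBA {
  ba_space :> BanachSpace;
  ba_mul : ba_space -> ba_space -> ba_space;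
  ba_mulA : forall x y z, ba_mul x (ba_mul y z) = ba_mul (ba_mul x y) z;
  ba_mulDl : forall x y z, ba_mul (bs_add x y) z = bs_add (ba_mul x z) (ba_mul y z);
  ba_mulDr : forall x y z, ba_mul x (bs_add y z) = bs_add (ba_mul x y) (ba_mul x z);
  ba_scal_mull : forall a x y, bs_scal a (ba_mul x y) = ba_mul (bs_scal a x) y;
  ba_scal_mulr : forall a x y, bs_scal a (ba_mul x y) = ba_mul x (bs_scal a y);
  ba_normM : forall x y, bs_norm (ba_mul x y) <= bs_norm x * bs_norm y
}.
Arguments ba_mul {_}.

Definition is_linear {X Y : BanachSpace} (f : X -> Y) : Prop :=
  (forall x y, f (bs_add x y) = bs_add (f x) (f y)) /\
  (forall a x, f (bs_scal a x) = bs_scal a (f x)).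

Definition bounded_linear {X Y : BanachSpace} (f : X -> Y) : Prop :=
  is_linear f /\ exists M, forall x, bs_norm (f x) <= M * bs_norm x.

Definition is_bilinear {X Y Z : BanachSpace} (T : X -> Y -> Z) : Prop :=
  (forall x x' y, T (bs_add x x') y = bs_add (T x y) (T x' y)) /\
  (forall a x y, T (bs_scal a x) y = bs_scal a (T x y)) /\
  (forall x y y', T x (bs_add y y') = bs_add (T x y) (T x y')) /\
  (forall a x y, T x (bs_scal a y) = bs_scal a (T x y)).

Definition is_character (A : BanachAlgebra) (phi : A -> Cx) : Prop :=
  (forall x y, phi (bs_add x y) = Cadd (phi x) (phi y)) /\
  (forall a x, phi (bs_scal a x) = Cmul a (phi x)) /\
  (forall x y, phi (ba_mul x y) = Cmul (phi x) (phi y)) /\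
  (exists x, phi x <> Czero).

(** * Projective tensor product, via its (isometric) universal property:
   t is bilinear with ||t a b|| <= ||a|| ||b||, and every bounded bilinear
   T : X x Y -> E with ||T|| <= M factors uniquely through a bounded linear
   map P -> E of norm <= M.  This determines (P, t) up to isometric
   isomorphism as the completed projective tensor product X (x)_p Y. *)
Definition is_proj_tensor (X Y P : BanachSpace) (t : X -> Y -> P) : Prop :=
  is_bilinear t /\
  (forall x y, bs_norm (t x y) <= bs_norm x * bs_norm y) /\
  (forall (E : BanachSpace) (T : X -> Y -> E) (M : R),
     is_bilinear T ->
     (forall x y, bs_norm (T x y) <= M * (bs_norm x * bs_norm y)) ->
     exists L : P -> E,
       is_linear L /\ (forall z, bs_norm (L z) <= M * bs_norm z) /\
       (forall x y, L (t x y) = T x y) /\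
       (forall L' : P -> E, bounded_linear L' ->
          (forall x y, L' (t x y) = T x y) -> forall z, L' z = L z)).

Definition is_proj_tensor_alg (A B P : BanachAlgebra) (t : A -> B -> P) : Prop :=
  is_proj_tensor A B P t /\
  (forall a b c d, ba_mul (t a b) (t c d) = t (ba_mul a c) (ba_mul b d)).

Definition tens_lact {C : BanachAlgebra} {Q : BanachSpace} (tQ : C -> C -> Q)
    (c : C) : Q -> Q :=
  epsilon (inhabits (fun z : Q => z))
    (fun L : Q -> Q => bounded_linear L /\
       forall x y, L (tQ x y) = tQ (ba_mul c x) y).

Definition tens_ract {C : BanachAlgebra} {Q : BanachSpace} (tQ : C -> C -> Q)
    (c : C) : Q -> Q :=
  epsilon (inhabits (fun z : Q => z))
    (fun L : Q -> Q => bounded_linear L /\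
       forall x y, L (tQ x y) = tQ x (ba_mul y c)).

Definition tens_pi {C : BanachAlgebra} {Q : BanachSpace} (tQ : C -> C -> Q) : Q -> C :=
  epsilon (inhabits (fun _ : Q => (bs_zero : C)))
    (fun L : Q -> C => bounded_linear L /\
       forall x y, L (tQ x y) = ba_mul x y).

Record DirectedSet : Type := {
  ds_car :> Type;
  ds_le : ds_car -> ds_car -> Prop;
  ds_refl : forall i, ds_le i i;
  ds_trans : forall i j k, ds_le i j -> ds_le j k -> ds_le i k;
  ds_upper : forall i j, exists k, ds_le i k /\ ds_le j k;
  ds_inhab : ds_car
}.

Definition net_to0 {I : DirectedSet} (f : I -> R) : Prop :=
  forall eps, 0 < eps -> exists i0, forall i, ds_le I i0 i -> Rabs (f i) < eps.

Definition approx_left_biproj (C : BanachAlgebra) (theta : C -> Cx) : Prop :=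
  forall (Q : BanachSpace) (tQ : C -> C -> Q), is_proj_tensor C C Q tQ ->
  exists (I : DirectedSet) (rho : I -> C -> Q),
    (forall i, bounded_linear (rho i)) /\
    (forall c x : C, net_to0 (fun i =>
        bs_norm (bs_sub (tens_lact tQ c (rho i x)) (rho i (ba_mul c x))))) /\
    (forall c x : C, net_to0 (fun i =>
        bs_norm (bs_sub (rho i (ba_mul x c)) (bs_scal (theta c) (rho i x))))) /\
    (forall x : C, net_to0 (fun i =>
        Cmod (Csub (theta (tens_pi tQ (rho i x))) (theta x)))).

(* Main.v *)
Require Import Defs.
From Stdlib Require Import Reals Lra Lia Psatz List ClassicalEpsilon FunctionalExtensionality PropExtensionality ProofIrrelevance Classical.
Open Scope R_scope.
Arguments bs_addA {_}. Arguments bs_addC {_}. Arguments bs_add0 {_}. Arguments bs_addN {_}.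
Arguments bs_scalA {_}. Arguments bs_scal1 {_}. Arguments bs_scalDr {_}. Arguments bs_scalDl {_}.
Arguments bs_norm_eq0 {_}. Arguments bs_normZ {_}. Arguments bs_normD {_}. Arguments bs_complete {_}.
Arguments ba_mulA {_}. Arguments ba_mulDl {_}. Arguments ba_mulDr {_}. Arguments ba_scal_mull {_}.
Arguments ba_scal_mulr {_}. Arguments ba_normM {_}.


Lemma Cx_ext (a b c d : R) : a = c -> b = d -> mkCx a b = mkCx c d.
Proof. intros -> ->; reflexivity. Qed.

Lemma Cx_eta (z : Cx) : z = mkCx (Cre z) (Cim z).
Proof. destruct z; reflexivity. Qed.

Lemma Cmod_nonneg z : 0 <= Cmod z.
Proof. unfold Cmod; apply sqrt_pos. Qed.

Lemma Cmod_sq z : Cmod z * Cmod z = Cre z * Cre z + Cim z * Cim z.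
Proof. unfold Cmod; rewrite sqrt_sqrt; nra. Qed.

Lemma Cmod_eq_sq (z : Cx) (r : R) : 0 <= r -> r * r = Cre z * Cre z + Cim z * Cim z -> Cmod z = r.
Proof.
  intros H1 H2. unfold Cmod. rewrite <- H2. apply sqrt_square; auto.
Qed.

Lemma CmodM a b : Cmod (Cmul a b) = Cmod a * Cmod b.
Proof.
  apply Cmod_eq_sq. apply Rmult_le_pos; apply Cmod_nonneg.
  replace (Cmod a * Cmod b * (Cmod a * Cmod b)) with ((Cmod a * Cmod a) * (Cmod b * Cmod b)) by ring.
  rewrite !Cmod_sq. destruct a, b; simpl. ring.
Qed.

Lemma Cmod0 : Cmod Czero = 0.
Proof. apply Cmod_eq_sq; simpl; lra. Qed.

Lemma Cmod1 : Cmod Cone = 1.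
Proof. apply Cmod_eq_sq; simpl; lra. Qed.

Lemma Cmodm1 : Cmod (Copp Cone) = 1.
Proof. apply Cmod_eq_sq; simpl; lra. Qed.

Lemma Cmod_eq0 z : Cmod z = 0 -> z = Czero.
Proof.
  intro H. pose proof (Cmod_sq z) as E. rewrite H in E.
  destruct z as [x y]; simpl in *. unfold Czero. apply Cx_ext; nra.
Qed.

Lemma Cre_le z : Rabs (Cre z) <= Cmod z.
Proof.
  pose proof (Cmod_sq z). pose proof (Cmod_nonneg z).
  apply Rabs_le; split; nra.
Qed.

Lemma Cmod_triangle a b : Cmod (Cadd a b) <= Cmod a + Cmod b.
Proof.
  pose proof (Cmod_sq a). pose proof (Cmod_sq b). pose proof (Cmod_sq (Cadd a b)).
  pose proof (Cmod_nonneg a). pose proof (Cmod_nonneg b). pose proof (Cmod_nonneg (Cadd a b)).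
  destruct a as [x y], b as [u v]; simpl in *.
  set (A := Cmod (mkCx x y)) in *. set (B := Cmod (mkCx u v)) in *.
  set (C := Cmod (mkCx (x + u) (y + v))) in *.
  assert (HS : x*u + y*v <= A * B).
  { assert ((x*u+y*v)*(x*u+y*v) <= (A*B)*(A*B)).
    { replace ((A*B)*(A*B)) with ((A*A)*(B*B)) by ring. rewrite H, H0.
      pose proof (Rle_0_sqr (x*v - y*u)); unfold Rsqr in *. nra. }
    assert (0 <= A*B) by (apply Rmult_le_pos; auto).
    destruct (Rle_dec (x*u+y*v) (A*B)); auto.
    exfalso. assert (A*B*(A*B) < (x*u+y*v)*(x*u+y*v)).
    { apply Rmult_le_0_lt_compat; lra. } lra. }
  nra.
Qed.

Definition Cinv (z : Cx) : Cx :=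
  mkCx (Cre z / (Cre z * Cre z + Cim z * Cim z)) (- Cim z / (Cre z * Cre z + Cim z * Cim z)).

Lemma Cnorm_pos z : z <> Czero -> 0 < Cre z * Cre z + Cim z * Cim z.
Proof.
  intro H. destruct z as [x y]; simpl.
  destruct (Req_dec x 0); destruct (Req_dec y 0); try nra.
  subst; exfalso; apply H; reflexivity.
Qed.

Lemma Cinv_l z : z <> Czero -> Cmul (Cinv z) z = Cone.
Proof.
  intro H. pose proof (Cnorm_pos z H). destruct z as [x y]; simpl in *.
  unfold Cinv, Cmul, Cone; simpl. apply Cx_ext; field; lra.
Qed.

Lemma Cmul_comm a b : Cmul a b = Cmul b a.
Proof. destruct a, b; unfold Cmul; simpl; apply Cx_ext; ring. Qed.
Lemma Cmul_assoc a b c : Cmul a (Cmul b c) = Cmul (Cmul a b) c.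
Proof. destruct a, b, c; unfold Cmul; simpl; apply Cx_ext; ring. Qed.
Lemma Cmul_1_r a : Cmul a Cone = a.
Proof. destruct a; unfold Cmul, Cone; simpl; apply Cx_ext; ring. Qed.
Lemma Cmul_1_l a : Cmul Cone a = a.
Proof. destruct a; unfold Cmul, Cone; simpl; apply Cx_ext; ring. Qed.
Lemma Cadd_0_r a : Cadd a Czero = a.
Proof. destruct a; unfold Cadd, Czero; simpl; apply Cx_ext; ring. Qed.
Lemma Cadd_00 : Cadd Czero Czero = Czero.
Proof. unfold Cadd, Czero; simpl; apply Cx_ext; ring. Qed.
Lemma Cadd_m1_1 : Cadd (Copp Cone) Cone = Czero.
Proof. unfold Cadd, Copp, Cone, Czero; simpl; apply Cx_ext; ring. Qed.
Lemma Cmul_0_r a : Cmul a Czero = Czero.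
Proof. destruct a; unfold Cmul, Czero; simpl; apply Cx_ext; ring. Qed.
Lemma Csub_diag a : Csub a a = Czero.
Proof. destruct a; unfold Csub, Cadd, Copp, Czero; simpl; apply Cx_ext; ring. Qed.

Lemma Cmul_cancel_r a b c : c <> Czero -> Cmul a c = Cmul b c -> a = b.
Proof.
  intros Hc H. rewrite <- (Cmul_1_r a), <- (Cmul_1_r b).
  rewrite <- (Cinv_l c Hc). rewrite (Cmul_comm (Cinv c) c), !Cmul_assoc, H. reflexivity.
Qed.

Lemma Cmod_inv z : z <> Czero -> Cmod (Cinv z) * Cmod z = 1.
Proof. intro H. rewrite <- CmodM, Cinv_l by auto. apply Cmod1. Qed.

Lemma Cadd_self_neq a : Cadd Cone a <> a.
Proof. destruct a; unfold Cadd, Cone; simpl. intro H; injection H; lra. Qed.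


Lemma add0l {X : BanachSpace} (x : X) : bs_add bs_zero x = x.
Proof. rewrite bs_addC; apply bs_add0. Qed.

Lemma addNl {X : BanachSpace} (x : X) : bs_add (bs_opp x) x = bs_zero.
Proof. rewrite bs_addC; apply bs_addN. Qed.

Lemma add_cancel_l {X : BanachSpace} (a b c : X) : bs_add a b = bs_add a c -> b = c.
Proof.
  intro H. rewrite <- (add0l b), <- (add0l c), <- (addNl a), <- !bs_addA, H. reflexivity.
Qed.

Lemma opp_unique {X : BanachSpace} (a b : X) : bs_add a b = bs_zero -> b = bs_opp a.
Proof. intro H. apply (add_cancel_l a). rewrite H, bs_addN. reflexivity. Qed.

Lemma oppK {X : BanachSpace} (a : X) : bs_opp (bs_opp a) = a.
Proof. symmetry. apply opp_unique. apply addNl. Qed.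

Lemma opp0 {X : BanachSpace} : bs_opp (bs_zero : X) = bs_zero.
Proof. symmetry. apply opp_unique. apply bs_add0. Qed.

Lemma oppD {X : BanachSpace} (a b : X) : bs_opp (bs_add a b) = bs_add (bs_opp a) (bs_opp b).
Proof.
  symmetry. apply opp_unique.
  rewrite (bs_addC (bs_opp a)), bs_addA, <- (bs_addA a b), bs_addN, bs_add0, bs_addN. reflexivity.
Qed.

Lemma add_zero_eq {X : BanachSpace} (a b : X) : bs_add a b = a -> b = bs_zero.
Proof. intro H. apply (add_cancel_l a). rewrite H, bs_add0. reflexivity. Qed.

Lemma scal_zero_v {X : BanachSpace} a : bs_scal a (bs_zero : X) = bs_zero.
Proof.
  apply (add_zero_eq (bs_scal a bs_zero)). rewrite <- bs_scalDr, bs_add0. reflexivity.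
Qed.

Lemma scal_zero_c {X : BanachSpace} (x : X) : bs_scal Czero x = bs_zero.
Proof.
  apply (add_zero_eq (bs_scal Czero x)). rewrite <- bs_scalDl, Cadd_00. reflexivity.
Qed.

Lemma opp_scal {X : BanachSpace} (x : X) : bs_opp x = bs_scal (Copp Cone) x.
Proof.
  symmetry. apply opp_unique. rewrite <- (bs_scal1 x) at 1.
  rewrite <- bs_scalDl.
  replace (Cadd Cone (Copp Cone)) with Czero by (unfold Cadd, Copp, Cone, Czero; simpl; apply Cx_ext; ring).
  apply scal_zero_c.
Qed.

Lemma norm_zero {X : BanachSpace} : bs_norm (bs_zero : X) = 0.
Proof. rewrite <- (scal_zero_c (bs_zero : X)), bs_normZ, Cmod0. ring. Qed.

Lemma norm_opp {X : BanachSpace} (x : X) : bs_norm (bs_opp x) = bs_norm x.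
Proof. rewrite opp_scal, bs_normZ, Cmodm1. ring. Qed.

Lemma norm_nonneg {X : BanachSpace} (x : X) : 0 <= bs_norm x.
Proof.
  pose proof (bs_normD x (bs_opp x)). rewrite bs_addN, norm_zero, norm_opp in H. lra.
Qed.

Lemma scal_opp {X : BanachSpace} a (x : X) : bs_scal a (bs_opp x) = bs_opp (bs_scal a x).
Proof.
  apply opp_unique. rewrite <- bs_scalDr, bs_addN. apply scal_zero_v.
Qed.

Lemma sub_self {X : BanachSpace} (x : X) : bs_sub x x = bs_zero.
Proof. apply bs_addN. Qed.

Lemma sub_add {X : BanachSpace} (a b c : X) : bs_sub a c = bs_add (bs_sub a b) (bs_sub b c).
Proof.
  unfold bs_sub. rewrite <- bs_addA, (bs_addA (bs_opp b)), addNl, add0l. reflexivity.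
Qed.

Lemma sub_opp {X : BanachSpace} (a b : X) : bs_sub a b = bs_opp (bs_sub b a).
Proof. unfold bs_sub. rewrite oppD, oppK, bs_addC. reflexivity. Qed.

Lemma norm_sub_sym {X : BanachSpace} (a b : X) : bs_norm (bs_sub a b) = bs_norm (bs_sub b a).
Proof. rewrite sub_opp, norm_opp. reflexivity. Qed.

Lemma norm_sub_tri {X : BanachSpace} (a b c : X) :
  bs_norm (bs_sub a c) <= bs_norm (bs_sub a b) + bs_norm (bs_sub b c).
Proof. rewrite (sub_add a b c). apply bs_normD. Qed.

Lemma sub_addadd {X : BanachSpace} (a b c d : X) :
  bs_sub (bs_add a b) (bs_add c d) = bs_add (bs_sub a c) (bs_sub b d).
Proof.
  unfold bs_sub. rewrite oppD, !bs_addA. f_equal.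
  rewrite <- !bs_addA. f_equal. apply bs_addC.
Qed.

Lemma sub_scal {X : BanachSpace} a (x y : X) : bs_sub (bs_scal a x) (bs_scal a y) = bs_scal a (bs_sub x y).
Proof. unfold bs_sub. rewrite bs_scalDr, scal_opp. reflexivity. Qed.

Lemma sub_eq0 {X : BanachSpace} (a b : X) : bs_sub a b = bs_zero -> a = b.
Proof.
  intro H. unfold bs_sub in H. apply opp_unique in H. rewrite <- (oppK b), H, oppK. reflexivity.
Qed.

Lemma sub0r {X : BanachSpace} (a : X) : bs_sub a bs_zero = a.
Proof. unfold bs_sub. rewrite opp0, bs_add0. reflexivity. Qed.

Lemma norm_le_eps {X : BanachSpace} (x : X) : (forall eps, 0 < eps -> bs_norm x <= eps) -> x = bs_zero.
Proof.
  intro H. apply bs_norm_eq0. pose proof (norm_nonneg x).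
  destruct (Req_dec (bs_norm x) 0); auto. exfalso.
  specialize (H (bs_norm x / 2)). lra.
Qed.

Lemma le_eps (a b : R) : (forall eps, 0 < eps -> a <= b + eps) -> a <= b.
Proof.
  intro H. destruct (Rle_dec a b); auto. specialize (H ((a - b)/2)). lra.
Qed.

Lemma lin_zero {X Y : BanachSpace} (f : X -> Y) : is_linear f -> f bs_zero = bs_zero.
Proof.
  intros [Ha _]. apply (add_zero_eq (f bs_zero)). rewrite <- Ha, bs_add0. reflexivity.
Qed.

Lemma lin_opp {X Y : BanachSpace} (f : X -> Y) x : is_linear f -> f (bs_opp x) = bs_opp (f x).
Proof.
  intros Hl. apply opp_unique. destruct Hl as [Ha Hs]. rewrite <- Ha, bs_addN. apply lin_zero. split; auto.
Qed.

Lemma lin_sub {X Y : BanachSpace} (f : X -> Y) x y : is_linear f -> f (bs_sub x y) = bs_sub (f x) (f y).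
Proof.
  intros Hl. unfold bs_sub. destruct Hl as [Ha Hs]. rewrite Ha, lin_opp; auto. split; auto.
Qed.

Fixpoint psum {X : BanachSpace} (f : nat -> X) (n : nat) : X :=
  match n with O => bs_zero | S n => bs_add (psum f n) (f n) end.

Fixpoint rsum (a : nat -> R) (n : nat) : R :=
  match n with O => 0 | S n => rsum a n + a n end.

Definition has_sum {X : BanachSpace} (f : nat -> X) (l : X) : Prop :=
  forall eps, 0 < eps -> exists N, forall n, (N <= n)%nat -> bs_norm (bs_sub (psum f n) l) < eps.

Lemma has_sum_unique {X : BanachSpace} (f : nat -> X) l l' : has_sum f l -> has_sum f l' -> l = l'.
Proof.
  intros H1 H2. apply sub_eq0. apply norm_le_eps. intros eps Heps.
  destruct (H1 (eps/2)) as [N1 HN1]; try lra. destruct (H2 (eps/2)) as [N2 HN2]; try lra.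
  specialize (HN1 (N1+N2)%nat ltac:(lia)). specialize (HN2 (N1+N2)%nat ltac:(lia)).
  pose proof (norm_sub_tri l (psum f (N1+N2)) l'). rewrite (norm_sub_sym l (psum f (N1+N2))) in H. lra.
Qed.

Lemma has_sum_ext {X : BanachSpace} (f g : nat -> X) l : (forall n, f n = g n) -> has_sum f l -> has_sum g l.
Proof. intros H. replace g with f; auto. apply functional_extensionality; auto. Qed.

Lemma psum_add {X : BanachSpace} (f g : nat -> X) n :
  psum (fun k => bs_add (f k) (g k)) n = bs_add (psum f n) (psum g n).
Proof.
  induction n; simpl. rewrite bs_add0; auto.
  rewrite IHn. rewrite <- !bs_addA. f_equal. rewrite !bs_addA. f_equal. apply bs_addC.
Qed.

Lemma has_sum_add {X : BanachSpace} (f g : nat -> X) l l' :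
  has_sum f l -> has_sum g l' -> has_sum (fun k => bs_add (f k) (g k)) (bs_add l l').
Proof.
  intros H1 H2 eps Heps.
  destruct (H1 (eps/2)) as [N1 HN1]; try lra. destruct (H2 (eps/2)) as [N2 HN2]; try lra.
  exists (N1+N2)%nat. intros n Hn. rewrite psum_add, sub_addadd.
  eapply Rle_lt_trans. apply bs_normD.
  specialize (HN1 n ltac:(lia)). specialize (HN2 n ltac:(lia)). lra.
Qed.

Lemma psum_lin {X Y : BanachSpace} (g : X -> Y) (f : nat -> X) n :
  is_linear g -> psum (fun k => g (f k)) n = g (psum f n).
Proof.
  intro Hg. induction n; simpl. symmetry; apply lin_zero; auto.
  rewrite IHn. destruct Hg as [Ha _]. rewrite Ha; auto.
Qed.

Lemma has_sum_lin {X Y : BanachSpace} (g : X -> Y) (f : nat -> X) l :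
  bounded_linear g -> has_sum f l -> has_sum (fun k => g (f k)) (g l).
Proof.
  intros [Hl [K HK]] H eps Heps.
  destruct (H (eps / (Rabs K + 1))) as [N HN].
  { apply Rdiv_lt_0_compat; auto. pose proof (Rabs_pos K); lra. }
  exists N. intros n Hn. rewrite psum_lin by auto. rewrite <- lin_sub by auto.
  eapply Rle_lt_trans. apply HK.
  specialize (HN n Hn). pose proof (Rabs_pos K). pose proof (norm_nonneg (bs_sub (psum f n) l)).
  assert (K * bs_norm (bs_sub (psum f n) l) <= (Rabs K + 1) * bs_norm (bs_sub (psum f n) l)).
  { apply Rmult_le_compat_r; auto. pose proof (Rle_abs K); lra. }
  assert ((Rabs K + 1) * bs_norm (bs_sub (psum f n) l) < eps).
  { apply (Rmult_lt_compat_l (Rabs K + 1)) in HN; try lra.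
    replace ((Rabs K + 1) * (eps / (Rabs K + 1))) with eps in HN by (field; lra). lra. }
  lra.
Qed.

Lemma psum_scal {X : BanachSpace} a (f : nat -> X) n :
  psum (fun k => bs_scal a (f k)) n = bs_scal a (psum f n).
Proof.
  induction n; simpl. symmetry; apply scal_zero_v. rewrite IHn, bs_scalDr; auto.
Qed.

Lemma has_sum_scal {X : BanachSpace} a (f : nat -> X) l :
  has_sum f l -> has_sum (fun k => bs_scal a (f k)) (bs_scal a l).
Proof.
  intros H eps Heps.
  destruct (H (eps / (Cmod a + 1))) as [N HN].
  { apply Rdiv_lt_0_compat; auto. pose proof (Cmod_nonneg a); lra. }
  exists N. intros n Hn. rewrite psum_scal, sub_scal, bs_normZ.
  specialize (HN n Hn). pose proof (Cmod_nonneg a). pose proof (norm_nonneg (bs_sub (psum f n) l)).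
  assert (Cmod a * bs_norm (bs_sub (psum f n) l) <= (Cmod a + 1) * bs_norm (bs_sub (psum f n) l)).
  { apply Rmult_le_compat_r; auto. lra. }
  assert ((Cmod a + 1) * bs_norm (bs_sub (psum f n) l) < eps).
  { apply (Rmult_lt_compat_l (Cmod a + 1)) in HN; try lra.
    replace ((Cmod a + 1) * (eps / (Cmod a + 1))) with eps in HN by (field; lra). lra. }
  lra.
Qed.

Lemma psum_opp {X : BanachSpace} (f : nat -> X) n :
  psum (fun k => bs_opp (f k)) n = bs_opp (psum f n).
Proof.
  induction n; simpl. symmetry; apply opp0. rewrite IHn, oppD; auto.
Qed.

Lemma has_sum_opp {X : BanachSpace} (f : nat -> X) l :
  has_sum f l -> has_sum (fun k => bs_opp (f k)) (bs_opp l).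
Proof.
  intros H. apply has_sum_ext with (fun k => bs_scal (Copp Cone) (f k)).
  intro; rewrite opp_scal; auto. rewrite opp_scal. apply has_sum_scal; auto.
Qed.

Lemma psum_stable {X : BanachSpace} (f : nat -> X) n :
  (forall k, (n <= k)%nat -> f k = bs_zero) -> forall m, (n <= m)%nat -> psum f m = psum f n.
Proof.
  intros H m Hm. induction Hm; auto. simpl. rewrite H by lia. rewrite bs_add0; auto.
Qed.

Lemma has_sum_finite {X : BanachSpace} (f : nat -> X) n :
  (forall k, (n <= k)%nat -> f k = bs_zero) -> has_sum f (psum f n).
Proof.
  intros H eps Heps. exists n. intros m Hm. rewrite (psum_stable f n H m Hm), sub_self, norm_zero. auto.
Qed.

Lemma has_sum_norm_le {X : BanachSpace} (f : nat -> X) l B :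
  has_sum f l -> (forall n, bs_norm (psum f n) <= B) -> bs_norm l <= B.
Proof.
  intros H HB. apply le_eps. intros eps Heps. destruct (H eps Heps) as [N HN].
  specialize (HN N (le_n _)). specialize (HB N).
  pose proof (norm_sub_tri l (psum f N) bs_zero). rewrite !sub0r, norm_sub_sym in H0. lra.
Qed.

Lemma rsum_nonneg a n : (forall k, 0 <= a k) -> 0 <= rsum a n.
Proof. intro H. induction n; simpl; auto. lra. specialize (H n). lra. Qed.

Lemma rsum_mono a n m : (forall k, 0 <= a k) -> (n <= m)%nat -> rsum a n <= rsum a m.
Proof. intros H Hm. induction Hm; simpl. lra. specialize (H m). lra. Qed.

Lemma rsum_le a b n : (forall k, a k <= b k) -> rsum a n <= rsum b n.
Proof. intro H. induction n; simpl. lra. specialize (H n). lra. Qed.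

Lemma rsum_tail_small a C : (forall k, 0 <= a k) -> (forall n, rsum a n <= C) ->
  forall eps, 0 < eps -> exists N, forall n m, (N <= n)%nat -> (n <= m)%nat -> rsum a m - rsum a n < eps.
Proof.
  intros Ha HC eps Heps.
  assert (Hg : Un_growing (rsum a)). { intro n; simpl. specialize (Ha n). lra. }
  assert (Hb : bound (EUn (rsum a))). { exists C. intros x [n ->]. auto. }
  destruct (growing_cv _ Hg Hb) as [l Hl].
  assert (Hc : Cauchy_crit (rsum a)). { apply CV_Cauchy. exists l; auto. }
  destruct (Hc eps Heps) as [N HN]. exists N. intros n m Hn Hm.
  specialize (HN m n ltac:(lia) ltac:(lia)). unfold R_dist in HN.
  pose proof (rsum_mono a n m Ha Hm). rewrite Rabs_right in HN; lra.
Qed.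

Lemma psum_diff_le {X : BanachSpace} (f : nat -> X) a n m : (forall k, bs_norm (f k) <= a k) -> (n <= m)%nat ->
  bs_norm (bs_sub (psum f m) (psum f n)) <= rsum a m - rsum a n.
Proof.
  intros H Hm. induction Hm. rewrite sub_self, norm_zero. lra.
  simpl. replace (bs_sub (bs_add (psum f m) (f m)) (psum f n)) with
    (bs_add (bs_sub (psum f m) (psum f n)) (f m)).
  eapply Rle_trans. apply bs_normD. specialize (H m). lra.
  unfold bs_sub. rewrite <- !bs_addA. f_equal. apply bs_addC.
Qed.

Lemma psum_norm_le {X : BanachSpace} (f : nat -> X) a n : (forall k, bs_norm (f k) <= a k) ->
  bs_norm (psum f n) <= rsum a n.
Proof.
  intros H. pose proof (psum_diff_le f a 0 n H ltac:(lia)). simpl in H0. rewrite sub0r in H0. lra.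
Qed.

Lemma has_sum_exists {X : BanachSpace} (f : nat -> X) a C :
  (forall k, bs_norm (f k) <= a k) -> (forall n, rsum a n <= C) -> exists l, has_sum f l.
Proof.
  intros H HC.
  assert (Ha : forall k, 0 <= a k). { intro k. pose proof (norm_nonneg (f k)). specialize (H k). lra. }
  destruct (bs_complete (psum f)) as [l Hl].
  { intros eps Heps. destruct (rsum_tail_small a C Ha HC eps Heps) as [N HN].
    exists N. intros n m Hn Hm. change (bs_norm (bs_sub (psum f n) (psum f m)) < eps). destruct (Compare_dec.le_ge_dec n m).
    - rewrite norm_sub_sym. eapply Rle_lt_trans. apply psum_diff_le; eauto. apply HN; lia.
    - eapply Rle_lt_trans. apply psum_diff_le; eauto. apply HN; lia. }
  exists l. exact Hl.
Qed.

Lemma geom_rsum r n : 0 <= r < 1 -> rsum (fun k => r ^ (S k)) n * (1 - r) = r - r ^ (S n).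
Proof.
  intro Hr. induction n; simpl. ring. simpl in IHn.
  replace ((rsum (fun k : nat => r * r ^ k) n + r * r ^ n) * (1 - r))
    with (rsum (fun k : nat => r * r ^ k) n * (1 - r) + r * r ^ n * (1 - r)) by ring.
  rewrite IHn. ring.
Qed.

Lemma geom_bound r n : 0 <= r < 1 -> rsum (fun k => r ^ (S k)) n <= r / (1 - r).
Proof.
  intro Hr. pose proof (geom_rsum r n Hr).
  assert (0 <= r ^ S n) by (apply pow_le; lra).
  apply (Rmult_le_reg_r (1 - r)). lra. rewrite H. unfold Rdiv. rewrite Rmult_assoc, Rinv_l by lra. lra.
Qed.

Lemma psum_shift {X : BanachSpace} (f : nat -> X) n :
  psum f (S n) = bs_add (f O) (psum (fun k => f (S k)) n).
Proof.
  induction n. simpl. rewrite add0l, bs_add0; auto.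
  change (psum f (S (S n))) with (bs_add (psum f (S n)) (f (S n))).
  rewrite IHn. simpl. rewrite bs_addA; auto.
Qed.

Lemma lmul_bounded (A : BanachAlgebra) (y : A) : bounded_linear (fun x : A => ba_mul y x).
Proof.
  split. split. intros; apply ba_mulDr. intros; symmetry; apply ba_scal_mulr.
  exists (bs_norm y). intro; apply ba_normM.
Qed.

Lemma rmul_bounded (A : BanachAlgebra) (y : A) : bounded_linear (fun x : A => ba_mul x y).
Proof.
  split. split. intros; apply ba_mulDl. intros; symmetry; apply ba_scal_mull.
  exists (bs_norm y). intro. rewrite Rmult_comm. apply ba_normM.
Qed.

Fixpoint pw {A : BanachAlgebra} (y : A) (n : nat) : A :=
  match n with O => y | S n => ba_mul y (pw y n) end.

Lemma char_bounded (A : BanachAlgebra) (phi : A -> Cx) :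
  is_character A phi -> forall x, Cmod (phi x) <= bs_norm x.
Proof.
  intros [Hadd [Hsc [Hmul _]]] b.
  destruct (Rle_dec (Cmod (phi b)) (bs_norm b)) as [|Hlt]; auto. exfalso.
  apply Rnot_le_lt in Hlt.
  assert (Hnz : phi b <> Czero).
  { intro E. rewrite E, Cmod0 in Hlt. pose proof (norm_nonneg b). lra. }
  set (c := Cinv (phi b)). set (y := bs_scal c b).
  assert (Hy1 : phi y = Cone). { unfold y. rewrite Hsc. apply Cinv_l; auto. }
  pose proof (Cmod_inv _ Hnz) as Hci. fold c in Hci.
  set (r := bs_norm y).
  assert (Hr : 0 <= r < 1).
  { split. apply norm_nonneg. unfold r, y. rewrite bs_normZ.
    pose proof (Cmod_nonneg c). pose proof (norm_nonneg b).
    assert (0 < Cmod c). { destruct (Req_dec (Cmod c) 0); [|lra]. rewrite H1 in Hci. lra. }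
    assert (Cmod c * bs_norm b < Cmod c * Cmod (phi b)) by (apply Rmult_lt_compat_l; auto).
    lra. }
  assert (Hpw : forall n, bs_norm (pw y n) <= r ^ (S n)).
  { induction n; simpl. unfold r; lra.
    eapply Rle_trans. apply ba_normM. fold r. apply Rmult_le_compat_l. lra. exact IHn. }
  destruct (has_sum_exists (pw y) (fun k => r ^ S k) (r / (1 - r)) Hpw (fun n => geom_bound r n Hr)) as [z Hz].
  assert (Hz2 : has_sum (pw y) (bs_add y (ba_mul y z))).
  { pose proof (has_sum_lin _ _ _ (lmul_bounded A y) Hz) as Hs. simpl in Hs.
    intros eps Heps. destruct (Hs eps Heps) as [N HN]. exists (S N). intros n Hn.
    destruct n. lia. rewrite psum_shift. simpl pw.
    replace (bs_sub (bs_add y (psum (fun k => ba_mul y (pw y k)) n)) (bs_add y (ba_mul y z)))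
      with (bs_sub (psum (fun k => ba_mul y (pw y k)) n) (ba_mul y z)).
    apply HN. lia.
    rewrite sub_addadd, sub_self, add0l. auto. }
  pose proof (has_sum_unique _ _ _ Hz Hz2) as E.
  apply (f_equal phi) in E. rewrite Hadd, Hmul, Hy1, Cmul_1_l in E.
  apply (Cadd_self_neq (phi z)). auto.
Qed.

Definition rep (X Y : BanachSpace) := nat -> list (X * Y).

Definition lsum {X Y E : BanachSpace} (T : X -> Y -> E) (l : list (X * Y)) : E :=
  fold_right (fun p acc => bs_add (T (fst p) (snd p)) acc) bs_zero l.
Definition lcost {X Y : BanachSpace} (l : list (X * Y)) : R :=
  fold_right (fun p acc => bs_norm (fst p) * bs_norm (snd p) + acc) 0 l.
Definition sumT {X Y E : BanachSpace} (T : X -> Y -> E) (w : rep X Y) : nat -> E :=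
  fun k => lsum T (w k).
Definition pcost {X Y : BanachSpace} (w : rep X Y) (n : nat) : R := rsum (fun k => lcost (w k)) n.
Definition summable {X Y : BanachSpace} (w : rep X Y) : Prop := exists C, forall n, pcost w n <= C.
Definition bil_bnd {X Y E : BanachSpace} (T : X -> Y -> E) (M : R) : Prop :=
  is_bilinear T /\ forall x y, bs_norm (T x y) <= M * (bs_norm x * bs_norm y).

Definition Rel {X Y : BanachSpace} (w w' : rep X Y) : Prop :=
  forall (E : BanachSpace) (T : X -> Y -> E) (M : R), bil_bnd T M ->
  forall l l', has_sum (sumT T w) l -> has_sum (sumT T w') l' -> l = l'.

Lemma lcost_nonneg {X Y : BanachSpace} (l : list (X * Y)) : 0 <= lcost l.
Proof.
  induction l; simpl. lra. pose proof (norm_nonneg (fst a)); pose proof (norm_nonneg (snd a)).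
  pose proof (Rmult_le_pos _ _ H H0). lra.
Qed.

Lemma lcost_app {X Y : BanachSpace} (l l' : list (X * Y)) : lcost (l ++ l') = lcost l + lcost l'.
Proof. induction l; simpl. lra. rewrite IHl. lra. Qed.

Lemma lsum_app {X Y E : BanachSpace} (T : X -> Y -> E) l l' : lsum T (l ++ l') = bs_add (lsum T l) (lsum T l').
Proof. induction l; simpl. rewrite add0l; auto. unfold lsum in *. simpl. rewrite IHl, bs_addA; auto. Qed.

Lemma bil_zero_l {X Y E : BanachSpace} (T : X -> Y -> E) y : is_bilinear T -> T bs_zero y = bs_zero.
Proof.
  intros [H1 _]. apply (add_zero_eq (T bs_zero y)). rewrite <- H1, bs_add0; auto.
Qed.

Lemma bil_opp_l {X Y E : BanachSpace} (T : X -> Y -> E) x y : is_bilinear T -> T (bs_opp x) y = bs_opp (T x y).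
Proof.
  intros HT. apply opp_unique. pose proof HT as [H1 _]. rewrite <- H1, bs_addN. apply bil_zero_l; auto.
Qed.

Definition oppmap {X Y : BanachSpace} (l : list (X * Y)) : list (X * Y) :=
  map (fun p => (bs_opp (fst p), snd p)) l.
Definition scalmap {X Y : BanachSpace} (a : Cx) (l : list (X * Y)) : list (X * Y) :=
  map (fun p => (bs_scal a (fst p), snd p)) l.

Lemma lcost_opp {X Y : BanachSpace} (l : list (X * Y)) : lcost (oppmap l) = lcost l.
Proof. unfold lcost, oppmap. induction l; simpl; auto. rewrite norm_opp, IHl; auto. Qed.

Lemma lcost_scal {X Y : BanachSpace} a (l : list (X * Y)) : lcost (scalmap a l) = Cmod a * lcost l.
Proof. unfold lcost, scalmap. induction l; simpl. ring. rewrite bs_normZ, IHl; ring. Qed.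

Lemma lsum_opp {X Y E : BanachSpace} (T : X -> Y -> E) l : is_bilinear T -> lsum T (oppmap l) = bs_opp (lsum T l).
Proof.
  intro HT. unfold lsum, oppmap. induction l; simpl. rewrite opp0; auto.
  rewrite IHl, bil_opp_l, oppD; auto.
Qed.

Lemma lsum_scal {X Y E : BanachSpace} (T : X -> Y -> E) a l : is_bilinear T -> lsum T (scalmap a l) = bs_scal a (lsum T l).
Proof.
  intro HT. unfold lsum, scalmap. induction l; simpl. rewrite scal_zero_v; auto.
  rewrite IHl, bs_scalDr. destruct HT as [_ [H2 _]]. rewrite H2; auto.
Qed.

Lemma lsum_norm {X Y E : BanachSpace} (T : X -> Y -> E) M l : bil_bnd T M ->
  bs_norm (lsum T l) <= Rabs M * lcost l.
Proof.
  intros [HT HM]. unfold lsum, lcost. induction l; simpl. rewrite norm_zero; lra.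
  eapply Rle_trans. apply bs_normD.
  specialize (HM (fst a) (snd a)).
  pose proof (Rmult_le_pos _ _ (norm_nonneg (fst a)) (norm_nonneg (snd a))).
  assert (M * (bs_norm (fst a) * bs_norm (snd a)) <= Rabs M * (bs_norm (fst a) * bs_norm (snd a))).
  { apply Rmult_le_compat_r; auto. apply Rle_abs. }
  nra.
Qed.

Lemma rsum_scal c a n : rsum (fun k => c * a k) n = c * rsum a n.
Proof. induction n; simpl. ring. rewrite IHn; ring. Qed.

Lemma rsum_plus a b n : rsum (fun k => a k + b k) n = rsum a n + rsum b n.
Proof. induction n; simpl. ring. rewrite IHn; ring. Qed.

Lemma rsum_ext a b n : (forall k, a k = b k) -> rsum a n = rsum b n.
Proof. intro H. induction n; simpl; auto. rewrite IHn, H; auto. Qed.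

Lemma pcost_nonneg {X Y : BanachSpace} (w : rep X Y) n : 0 <= pcost w n.
Proof. apply rsum_nonneg. intro; apply lcost_nonneg. Qed.

Lemma sum_exists {X Y E : BanachSpace} (T : X -> Y -> E) M (w : rep X Y) :
  summable w -> bil_bnd T M -> exists l, has_sum (sumT T w) l.
Proof.
  intros [C HC] HT. apply has_sum_exists with (a := fun k => Rabs M * lcost (w k)) (C := Rabs M * C).
  intro k. apply lsum_norm; auto.
  intro n. rewrite rsum_scal. apply Rmult_le_compat_l. apply Rabs_pos. apply HC.
Qed.

Lemma sum_bound {X Y E : BanachSpace} (T : X -> Y -> E) M (w : rep X Y) l c :
  bil_bnd T M -> has_sum (sumT T w) l -> (forall n, pcost w n <= c) -> bs_norm l <= Rabs M * c.
Proof.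
  intros HT Hl Hc. apply (has_sum_norm_le _ _ _ Hl). intro n.
  eapply Rle_trans. apply psum_norm_le with (a := fun k => Rabs M * lcost (w k)).
  intro k; apply lsum_norm; auto.
  rewrite rsum_scal. apply Rmult_le_compat_l. apply Rabs_pos. apply Hc.
Qed.

Lemma Rel_refl {X Y : BanachSpace} (w : rep X Y) : Rel w w.
Proof. intros E T M HT l l' H1 H2. eapply has_sum_unique; eauto. Qed.

Lemma Rel_sym {X Y : BanachSpace} (w w' : rep X Y) : Rel w w' -> Rel w' w.
Proof. intros H E T M HT l l' H1 H2. symmetry. eapply H; eauto. Qed.

Lemma Rel_trans {X Y : BanachSpace} (w1 w2 w3 : rep X Y) : summable w2 -> Rel w1 w2 -> Rel w2 w3 -> Rel w1 w3.
Proof.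
  intros Hs H12 H23 E T M HT l l' H1 H3. destruct (sum_exists T M w2 Hs HT) as [l2 H2].
  transitivity l2. eapply H12; eauto. eapply H23; eauto.
Qed.

Lemma Rel_intro {X Y : BanachSpace} (w w' : rep X Y) :
  (forall (E : BanachSpace) (T : X -> Y -> E) M l, bil_bnd T M -> has_sum (sumT T w) l -> has_sum (sumT T w') l) ->
  Rel w w'.
Proof. intros H E T M HT l l' H1 H2. eapply has_sum_unique. eapply H; eauto. auto. Qed.

Lemma Rel_use {X Y E : BanachSpace} (w w' : rep X Y) (T : X -> Y -> E) M l :
  Rel w w' -> summable w' -> bil_bnd T M -> has_sum (sumT T w) l -> has_sum (sumT T w') l.
Proof.
  intros HR Hs HT Hl. destruct (sum_exists T M w' Hs HT) as [l' Hl'].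
  replace l with l'; auto. symmetry. eapply HR; eauto.
Qed.

Definition cls {X Y : BanachSpace} (w : rep X Y) : rep X Y -> Prop := fun w' => summable w' /\ Rel w w'.

Definition Vcar (X Y : BanachSpace) : Type := {S : rep X Y -> Prop | exists w, summable w /\ S = cls w}.

Definition zrep {X Y : BanachSpace} : rep X Y := fun _ => nil.

Lemma summable_zrep {X Y : BanachSpace} : summable (@zrep X Y).
Proof. exists 0. intro n. unfold pcost. change (rsum (fun _ => 0) n <= 0). induction n; simpl; lra. Qed.

Definition mkV {X Y : BanachSpace} (w : rep X Y) : Vcar X Y :=
  match excluded_middle_informative (summable w) with
  | left H => exist _ (cls w) (ex_intro _ w (conj H eq_refl))
  | right _ => exist _ (cls zrep) (ex_intro _ zrep (conj summable_zrep eq_refl))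
  end.

Lemma mkV_val {X Y : BanachSpace} (w : rep X Y) : summable w -> proj1_sig (mkV w) = cls w.
Proof. intro H. unfold mkV. destruct (excluded_middle_informative (summable w)); simpl; tauto. Qed.

Lemma V_eq {X Y : BanachSpace} (S S' : Vcar X Y) : proj1_sig S = proj1_sig S' -> S = S'.
Proof.
  destruct S as [S HS], S' as [S' HS']; simpl. intros ->. f_equal. apply proof_irrelevance.
Qed.

Lemma cls_eq {X Y : BanachSpace} (w w' : rep X Y) : summable w -> summable w' -> Rel w w' -> cls w = cls w'.
Proof.
  intros H1 H2 HR. apply functional_extensionality. intro v. apply propositional_extensionality.
  unfold cls. split; intros [Hv HRv]; split; auto.
  exact (Rel_trans w' w v H1 (Rel_sym _ _ HR) HRv).
  exact (Rel_trans w w' v H2 HR HRv).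
Qed.

Lemma mkV_eq {X Y : BanachSpace} (w w' : rep X Y) : summable w -> summable w' -> Rel w w' -> mkV w = mkV w'.
Proof. intros H1 H2 HR. apply V_eq. rewrite !mkV_val by auto. apply cls_eq; auto. Qed.

Lemma V_surj {X Y : BanachSpace} (S : Vcar X Y) : exists w, summable w /\ S = mkV w.
Proof.
  destruct S as [S [w [Hw HS]]]. exists w. split; auto. apply V_eq. simpl. rewrite mkV_val; auto.
Qed.

Definition repV {X Y : BanachSpace} (S : Vcar X Y) : rep X Y :=
  proj1_sig (constructive_indefinite_description _ (V_surj S)).

Lemma repV_spec {X Y : BanachSpace} (S : Vcar X Y) : summable (repV S) /\ S = mkV (repV S).
Proof. unfold repV. destruct (constructive_indefinite_description _ (V_surj S)); simpl; auto. Qed.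

Lemma repV_mkV {X Y : BanachSpace} (w : rep X Y) : summable w -> Rel w (repV (mkV w)).
Proof.
  intro H. destruct (repV_spec (mkV w)) as [Hs He].
  assert (proj1_sig (mkV w) (repV (mkV w))).
  { rewrite He at 1. rewrite mkV_val by auto. split; auto. apply Rel_refl. }
  rewrite mkV_val in H0 by auto. apply H0.
Qed.

Lemma MK {X Y : BanachSpace} (w w' : rep X Y) : summable w -> summable w' ->
  (forall (E : BanachSpace) (T : X -> Y -> E) M l, bil_bnd T M -> has_sum (sumT T w) l -> has_sum (sumT T w') l) ->
  mkV w = mkV w'.
Proof. intros H1 H2 H. apply mkV_eq; auto. apply Rel_intro; auto. Qed.

Lemma MK_pt {X Y : BanachSpace} (w w' : rep X Y) : summable w -> summable w' ->
  (forall (E : BanachSpace) (T : X -> Y -> E) M, bil_bnd T M -> forall k, sumT T w k = sumT T w' k) ->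
  mkV w = mkV w'.
Proof.
  intros H1 H2 H. apply MK; auto. intros E T M l HT Hl. eapply has_sum_ext; [|exact Hl]. apply H with M; auto.
Qed.

Lemma sum_repV {X Y E : BanachSpace} (w : rep X Y) (T : X -> Y -> E) M l :
  summable w -> bil_bnd T M -> has_sum (sumT T w) l -> has_sum (sumT T (repV (mkV w))) l.
Proof.
  intros Hs HT Hl. eapply Rel_use; eauto. apply repV_mkV; auto. apply (proj1 (repV_spec _)).
Qed.

Definition addrep {X Y : BanachSpace} (w w' : rep X Y) : rep X Y := fun k => w k ++ w' k.
Definition opprep {X Y : BanachSpace} (w : rep X Y) : rep X Y := fun k => oppmap (w k).
Definition scalrep {X Y : BanachSpace} a (w : rep X Y) : rep X Y := fun k => scalmap a (w k).
Definition blk {X Y : BanachSpace} (l : list (X * Y)) : rep X Y := fun k => match k with O => l | _ => nil end.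
Definition rtrunc {X Y : BanachSpace} n (w : rep X Y) : rep X Y := fun k => if Nat.ltb k n then w k else nil.
Definition rtail {X Y : BanachSpace} n (w : rep X Y) : rep X Y := fun k => if Nat.ltb k n then nil else w k.

Lemma summable_le {X Y : BanachSpace} (w w' : rep X Y) :
  (forall k, lcost (w' k) <= lcost (w k)) -> summable w -> summable w'.
Proof.
  intros H [C HC]. exists C. intro n. eapply Rle_trans; [|apply HC]. apply rsum_le. auto.
Qed.

Lemma pcost_addrep {X Y : BanachSpace} (w w' : rep X Y) n : pcost (addrep w w') n = pcost w n + pcost w' n.
Proof. unfold pcost. rewrite <- rsum_plus. apply rsum_ext. intro; unfold addrep; apply lcost_app. Qed.

Lemma summable_addrep {X Y : BanachSpace} (w w' : rep X Y) : summable w -> summable w' -> summable (addrep w w').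
Proof.
  intros [C HC] [C' HC']. exists (C + C'). intro n. rewrite pcost_addrep. specialize (HC n); specialize (HC' n). lra.
Qed.

Lemma summable_opprep {X Y : BanachSpace} (w : rep X Y) : summable w -> summable (opprep w).
Proof. apply summable_le. intro; unfold opprep; rewrite lcost_opp; lra. Qed.

Lemma pcost_scalrep {X Y : BanachSpace} a (w : rep X Y) n : pcost (scalrep a w) n = Cmod a * pcost w n.
Proof. unfold pcost. rewrite <- rsum_scal. apply rsum_ext. intro; unfold scalrep; apply lcost_scal. Qed.

Lemma summable_scalrep {X Y : BanachSpace} a (w : rep X Y) : summable w -> summable (scalrep a w).
Proof.
  intros [C HC]. exists (Cmod a * C). intro n. rewrite pcost_scalrep. apply Rmult_le_compat_l.
  apply Cmod_nonneg. auto.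
Qed.

Lemma pcost_blk {X Y : BanachSpace} (l : list (X * Y)) n : pcost (blk l) n <= lcost l.
Proof.
  unfold pcost. induction n; simpl. apply lcost_nonneg. destruct n; simpl in *. lra.
  change (lcost (@nil (X*Y))) with 0. lra.
Qed.

Lemma summable_blk {X Y : BanachSpace} (l : list (X * Y)) : summable (blk l).
Proof. exists (lcost l). apply pcost_blk. Qed.

Lemma summable_trunc {X Y : BanachSpace} n (w : rep X Y) : summable w -> summable (rtrunc n w).
Proof.
  apply summable_le. intro k; unfold rtrunc. destruct (Nat.ltb k n). lra. simpl. apply lcost_nonneg.
Qed.

Lemma summable_tail {X Y : BanachSpace} n (w : rep X Y) : summable w -> summable (rtail n w).
Proof.
  apply summable_le. intro k; unfold rtail. destruct (Nat.ltb k n). simpl. apply lcost_nonneg. lra.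
Qed.

Lemma hs_addrep {X Y E : BanachSpace} (T : X -> Y -> E) (w w' : rep X Y) l l' :
  has_sum (sumT T w) l -> has_sum (sumT T w') l' -> has_sum (sumT T (addrep w w')) (bs_add l l').
Proof.
  intros H1 H2. eapply has_sum_ext; [|apply (has_sum_add _ _ _ _ H1 H2)].
  intro k. unfold sumT, addrep. rewrite lsum_app; auto.
Qed.

Lemma hs_opprep {X Y E : BanachSpace} (T : X -> Y -> E) (w : rep X Y) l :
  is_bilinear T -> has_sum (sumT T w) l -> has_sum (sumT T (opprep w)) (bs_opp l).
Proof.
  intros HT H1. eapply has_sum_ext; [|apply (has_sum_opp _ _ H1)].
  intro k. unfold sumT, opprep. rewrite lsum_opp; auto.
Qed.

Lemma hs_scalrep {X Y E : BanachSpace} (T : X -> Y -> E) a (w : rep X Y) l :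
  is_bilinear T -> has_sum (sumT T w) l -> has_sum (sumT T (scalrep a w)) (bs_scal a l).
Proof.
  intros HT H1. eapply has_sum_ext; [|apply (has_sum_scal a _ _ H1)].
  intro k. unfold sumT, scalrep. rewrite lsum_scal; auto.
Qed.

Lemma hs_blk {X Y E : BanachSpace} (T : X -> Y -> E) (l : list (X * Y)) :
  has_sum (sumT T (blk l)) (lsum T l).
Proof.
  replace (lsum T l) with (psum (sumT T (blk l)) 1).
  apply has_sum_finite. intros k Hk. destruct k. lia. reflexivity.
  simpl. rewrite add0l. reflexivity.
Qed.

Lemma hs_unique_use {E : BanachSpace} (f : nat -> E) l l' : has_sum f l -> has_sum f l' -> l = l'.
Proof. apply has_sum_unique. Qed.

Definition zeroV {X Y : BanachSpace} : Vcar X Y := mkV zrep.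
Definition addV {X Y : BanachSpace} (S S' : Vcar X Y) : Vcar X Y := mkV (addrep (repV S) (repV S')).
Definition oppV {X Y : BanachSpace} (S : Vcar X Y) : Vcar X Y := mkV (opprep (repV S)).
Definition scalV {X Y : BanachSpace} a (S : Vcar X Y) : Vcar X Y := mkV (scalrep a (repV S)).

Lemma repV_sum {X Y : BanachSpace} (S : Vcar X Y) : summable (repV S).
Proof. apply repV_spec. Qed.

Lemma addV_mk {X Y : BanachSpace} (w w' : rep X Y) : summable w -> summable w' ->
  addV (mkV w) (mkV w') = mkV (addrep w w').
Proof.
  intros H1 H2. unfold addV. apply MK. apply summable_addrep; apply repV_sum.
  apply summable_addrep; auto.
  intros E T M l HT Hl. destruct (sum_exists T M w H1 HT) as [l1 Hl1].
  destruct (sum_exists T M w' H2 HT) as [l2 Hl2].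
  pose proof (hs_addrep T _ _ _ _ (sum_repV w T M l1 H1 HT Hl1) (sum_repV w' T M l2 H2 HT Hl2)) as Hs.
  rewrite (has_sum_unique _ _ _ Hl Hs). apply hs_addrep; auto.
Qed.

Lemma oppV_mk {X Y : BanachSpace} (w : rep X Y) : summable w -> oppV (mkV w) = mkV (opprep w).
Proof.
  intros H1. unfold oppV. apply MK. apply summable_opprep; apply repV_sum.
  apply summable_opprep; auto.
  intros E T M l HT Hl. destruct (sum_exists T M w H1 HT) as [l1 Hl1].
  pose proof (hs_opprep T _ _ (proj1 HT) (sum_repV w T M l1 H1 HT Hl1)) as Hs.
  rewrite (has_sum_unique _ _ _ Hl Hs). apply hs_opprep; auto. apply HT.
Qed.

Lemma scalV_mk {X Y : BanachSpace} a (w : rep X Y) : summable w -> scalV a (mkV w) = mkV (scalrep a w).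
Proof.
  intros H1. unfold scalV. apply MK. apply summable_scalrep; apply repV_sum.
  apply summable_scalrep; auto.
  intros E T M l HT Hl. destruct (sum_exists T M w H1 HT) as [l1 Hl1].
  pose proof (hs_scalrep T a _ _ (proj1 HT) (sum_repV w T M l1 H1 HT Hl1)) as Hs.
  rewrite (has_sum_unique _ _ _ Hl Hs). apply hs_scalrep; auto. apply HT.
Qed.

Definition costset {X Y : BanachSpace} (S : Vcar X Y) (c : R) : Prop :=
  exists w, proj1_sig S w /\ forall n, pcost w n <= c.

Definition normV {X Y : BanachSpace} (S : Vcar X Y) : R :=
  - epsilon (inhabits 0) (fun m => is_lub (fun x => costset S (- x)) m).

Lemma val_repV {X Y : BanachSpace} (S : Vcar X Y) : proj1_sig S = cls (repV S).
Proof. destruct (repV_spec S) as [H1 H2]. rewrite H2 at 1. apply mkV_val; auto. Qed.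

Lemma costset_ge0 {X Y : BanachSpace} (S : Vcar X Y) c : costset S c -> 0 <= c.
Proof. intros [w [_ H]]. specialize (H O). simpl in H. unfold pcost in H; simpl in H. auto. Qed.

Lemma costset_ne {X Y : BanachSpace} (S : Vcar X Y) : exists c, costset S c.
Proof.
  destruct (repV_sum S) as [C HC]. exists C. exists (repV S). split; auto.
  rewrite val_repV. split. apply repV_sum. apply Rel_refl.
Qed.

Lemma normV_lub {X Y : BanachSpace} (S : Vcar X Y) : is_lub (fun x => costset S (- x)) (- normV S).
Proof.
  unfold normV. rewrite Ropp_involutive. apply epsilon_spec.
  destruct (completeness (fun x => costset S (- x))) as [m Hm].
  { exists 0. intros x Hx. apply costset_ge0 in Hx. lra. }
  { destruct (costset_ne S) as [c Hc]. exists (-c). rewrite Ropp_involutive; auto. }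
  exists m; auto.
Qed.

Lemma normV_le {X Y : BanachSpace} (S : Vcar X Y) c : costset S c -> normV S <= c.
Proof.
  intro H. destruct (normV_lub S) as [H1 _]. specialize (H1 (-c)).
  assert (costset S (- - c)) by (rewrite Ropp_involutive; auto).
  specialize (H1 H0). lra.
Qed.

Lemma normV_ge {X Y : BanachSpace} (S : Vcar X Y) b : (forall c, costset S c -> b <= c) -> b <= normV S.
Proof.
  intro H. destruct (normV_lub S) as [_ H2]. assert (- normV S <= - b). apply H2.
  intros x Hx. specialize (H _ Hx). lra. lra.
Qed.

Lemma normV_nonneg {X Y : BanachSpace} (S : Vcar X Y) : 0 <= normV S.
Proof. apply normV_ge. apply costset_ge0. Qed.

Lemma normV_approx {X Y : BanachSpace} (S : Vcar X Y) eps : 0 < eps -> exists c, costset S c /\ c < normV S + eps.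
Proof.
  intro He. destruct (classic (exists c, costset S c /\ c < normV S + eps)) as [H|H]; auto.
  exfalso. assert (normV S + eps <= normV S). apply normV_ge. intros c Hc.
  destruct (Rle_dec (normV S + eps) c); auto. exfalso; apply H. exists c; split; auto. lra. lra.
Qed.

Lemma N1 {X Y : BanachSpace} (w : rep X Y) c : summable w -> (forall n, pcost w n <= c) -> normV (mkV w) <= c.
Proof.
  intros Hs Hc. apply normV_le. exists w. split; auto. rewrite mkV_val by auto. split; auto. apply Rel_refl.
Qed.

Lemma N2 {X Y : BanachSpace} (S : Vcar X Y) eps : 0 < eps ->
  exists w, summable w /\ mkV w = S /\ forall n, pcost w n <= normV S + eps.
Proof.
  intro He. destruct (normV_approx S eps He) as [c [[w [Hw Hc]] Hlt]].
  rewrite val_repV in Hw. destruct Hw as [Hs HR]. exists w. split; auto. split.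
  transitivity (mkV (repV S)); [| symmetry; apply repV_spec]. apply mkV_eq; auto. apply repV_sum. apply Rel_sym; auto.
  intro n. specialize (Hc n). lra.
Qed.

Ltac vsurj S := let w := fresh "w" in let Hw := fresh "Hw" in destruct (V_surj S) as [w [Hw ->]].



Lemma V_addA {X Y : BanachSpace} (S1 S2 S3 : Vcar X Y) : addV S1 (addV S2 S3) = addV (addV S1 S2) S3.
Proof.
  vsurj S1; vsurj S2; vsurj S3.
  rewrite !addV_mk by (repeat apply summable_addrep; auto).
  f_equal. apply functional_extensionality; intro k. unfold addrep. apply app_assoc.
Qed.

Lemma V_addC {X Y : BanachSpace} (S1 S2 : Vcar X Y) : addV S1 S2 = addV S2 S1.
Proof.
  vsurj S1; vsurj S2. rewrite !addV_mk by auto.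
  apply MK_pt; try (apply summable_addrep; auto). intros E T M HT k. unfold sumT, addrep.
  rewrite !lsum_app. apply bs_addC.
Qed.

Lemma V_add0 {X Y : BanachSpace} (S : Vcar X Y) : addV S zeroV = S.
Proof.
  vsurj S. unfold zeroV. rewrite addV_mk by (auto; apply summable_zrep).
  f_equal. apply functional_extensionality; intro k. unfold addrep, zrep. apply app_nil_r.
Qed.

Lemma V_addN {X Y : BanachSpace} (S : Vcar X Y) : addV S (oppV S) = zeroV.
Proof.
  vsurj S. unfold zeroV. rewrite oppV_mk, addV_mk by (auto; apply summable_opprep; auto).
  apply MK_pt. apply summable_addrep; auto; apply summable_opprep; auto. apply summable_zrep.
  intros E T M HT k. unfold sumT, addrep, opprep, zrep. rewrite lsum_app, lsum_opp, bs_addN by apply HT.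
  reflexivity.
Qed.

Lemma scalmap_comp {X Y : BanachSpace} a b (l : list (X * Y)) : scalmap (Cmul a b) l = scalmap a (scalmap b l).
Proof. unfold scalmap. rewrite map_map. apply map_ext. intro p. simpl. rewrite bs_scalA; auto. Qed.

Lemma V_scalA {X Y : BanachSpace} a b (S : Vcar X Y) : scalV (Cmul a b) S = scalV a (scalV b S).
Proof.
  vsurj S. rewrite !scalV_mk by (auto; apply summable_scalrep; auto).
  f_equal. apply functional_extensionality; intro k. unfold scalrep. apply scalmap_comp.
Qed.

Lemma V_scal1 {X Y : BanachSpace} (S : Vcar X Y) : scalV Cone S = S.
Proof.
  vsurj S. rewrite scalV_mk by auto. f_equal. apply functional_extensionality; intro k. unfold scalrep, scalmap.
  rewrite <- (map_id (w k)) at 2. apply map_ext. intros [x y]. simpl. rewrite bs_scal1; auto.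
Qed.

Lemma V_scalDr {X Y : BanachSpace} a (S1 S2 : Vcar X Y) : scalV a (addV S1 S2) = addV (scalV a S1) (scalV a S2).
Proof.
  vsurj S1; vsurj S2. rewrite addV_mk by auto. rewrite !scalV_mk by (try apply summable_addrep; auto).
  rewrite addV_mk by (apply summable_scalrep; auto).
  f_equal. apply functional_extensionality; intro k. unfold scalrep, addrep, scalmap. apply map_app.
Qed.

Lemma V_scalDl {X Y : BanachSpace} a b (S : Vcar X Y) : scalV (Cadd a b) S = addV (scalV a S) (scalV b S).
Proof.
  vsurj S. rewrite !scalV_mk by auto. rewrite addV_mk by (apply summable_scalrep; auto).
  apply MK_pt. apply summable_scalrep; auto. apply summable_addrep; apply summable_scalrep; auto.
  intros E T M HT k. unfold sumT, scalrep, addrep. rewrite lsum_app, !lsum_scal by apply HT.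
  apply bs_scalDl.
Qed.

Lemma mkV_Rel {X Y : BanachSpace} (w w' : rep X Y) : summable w -> summable w' -> mkV w = mkV w' -> Rel w w'.
Proof.
  intros H1 H2 E. assert (cls w = cls w'). { rewrite <- !mkV_val by auto. rewrite E; auto. }
  assert (cls w' w'). { split; auto. apply Rel_refl. } rewrite <- H in H0. apply H0.
Qed.

Lemma V_norm_eq0 {X Y : BanachSpace} (S : Vcar X Y) : normV S = 0 -> S = zeroV.
Proof.
  intro H0. vsurj S. unfold zeroV. apply MK; auto. apply summable_zrep.
  intros E T M l HT Hl.
  assert (l = bs_zero).
  { apply norm_le_eps. intros eps He.
    assert (He' : 0 < eps / (Rabs M + 1)). { apply Rdiv_lt_0_compat; auto. pose proof (Rabs_pos M); lra. }
    destruct (N2 (mkV w) _ He') as [w' [Hs' [Heq Hc]]].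
    rewrite H0, Rplus_0_l in Hc.
    pose proof (Rel_use w w' T M l (mkV_Rel _ _ Hw Hs' (eq_sym Heq)) Hs' HT Hl) as Hl'.
    pose proof (sum_bound T M w' l _ HT Hl' Hc).
    assert (Rabs M * (eps / (Rabs M + 1)) <= eps).
    { pose proof (Rabs_pos M). unfold Rdiv. rewrite <- Rmult_assoc.
      apply (Rmult_le_reg_r (Rabs M + 1)). lra. rewrite Rmult_assoc, Rinv_l by lra. nra. }
    lra. }
  subst l. replace (@bs_zero E) with (psum (sumT T (@zrep X Y)) 0) by reflexivity.
  apply has_sum_finite. intros; reflexivity.
Qed.

Lemma normV_zero {X Y : BanachSpace} : normV (@zeroV X Y) = 0.
Proof.
  apply Rle_antisym; [|apply normV_nonneg]. apply N1. apply summable_zrep.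
  intro n. unfold pcost. change (rsum (fun _ => 0) n <= 0). induction n; simpl; lra.
Qed.

Lemma normZ_le {X Y : BanachSpace} a (S : Vcar X Y) : normV (scalV a S) <= Cmod a * normV S.
Proof.
  apply le_eps. intros eps He. pose proof (Cmod_nonneg a).
  assert (He' : 0 < eps / (Cmod a + 1)) by (apply Rdiv_lt_0_compat; lra).
  destruct (N2 S _ He') as [w [Hs [<- Hc]]]. rewrite scalV_mk by auto.
  eapply Rle_trans. apply N1. apply summable_scalrep; auto.
  intro n. rewrite pcost_scalrep. apply Rmult_le_compat_l; auto.
  rewrite Rmult_plus_distr_l.
  assert (Cmod a * (eps / (Cmod a + 1)) <= eps).
  { unfold Rdiv. rewrite <- Rmult_assoc.
    apply (Rmult_le_reg_r (Cmod a + 1)). lra. rewrite Rmult_assoc, Rinv_l by lra. nra. }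
  lra.
Qed.

Lemma V_normZ {X Y : BanachSpace} a (S : Vcar X Y) : normV (scalV a S) = Cmod a * normV S.
Proof.
  apply Rle_antisym. apply normZ_le.
  destruct (classic (a = Czero)) as [Ha|Ha].
  - subst. rewrite Cmod0, Rmult_0_l. apply normV_nonneg.
  - pose proof (normZ_le (Cinv a) (scalV a S)). rewrite <- V_scalA, Cinv_l, V_scal1 in H by auto.
    pose proof (Cmod_inv a Ha). pose proof (Cmod_nonneg a). pose proof (normV_nonneg (scalV a S)).
    apply (Rmult_le_compat_l (Cmod a)) in H; auto.
    replace (Cmod a * (Cmod (Cinv a) * normV (scalV a S))) with (normV (scalV a S)) in H by
      (rewrite <- Rmult_assoc, (Rmult_comm (Cmod a)), H0; ring).
    auto.
Qed.

Lemma V_normD {X Y : BanachSpace} (S1 S2 : Vcar X Y) : normV (addV S1 S2) <= normV S1 + normV S2.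
Proof.
  apply le_eps. intros eps He.
  destruct (N2 S1 (eps/2)) as [w1 [Hs1 [<- Hc1]]]. lra.
  destruct (N2 S2 (eps/2)) as [w2 [Hs2 [<- Hc2]]]. lra.
  rewrite addV_mk by auto. apply N1. apply summable_addrep; auto.
  intro n. rewrite pcost_addrep. specialize (Hc1 n); specialize (Hc2 n). lra.
Qed.


Definition subV {X Y : BanachSpace} (S S' : Vcar X Y) := addV S (oppV S').

Lemma subV_mk {X Y : BanachSpace} (w w' : rep X Y) : summable w -> summable w' ->
  subV (mkV w) (mkV w') = mkV (addrep w (opprep w')).
Proof. intros. unfold subV. rewrite oppV_mk, addV_mk by (try apply summable_opprep; auto). auto. Qed.

Lemma hs_sub {X Y E : BanachSpace} (T : X -> Y -> E) (w w' : rep X Y) l l' :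
  is_bilinear T -> has_sum (sumT T w) l -> has_sum (sumT T w') l' ->
  has_sum (sumT T (addrep w (opprep w'))) (bs_sub l l').
Proof. intros. apply hs_addrep; auto. apply hs_opprep; auto. Qed.

Lemma summable_sub {X Y : BanachSpace} (w w' : rep X Y) : summable w -> summable w' -> summable (addrep w (opprep w')).
Proof. intros; apply summable_addrep; auto; apply summable_opprep; auto. Qed.

Lemma V_subadd {X Y : BanachSpace} (x y z : Vcar X Y) : subV x z = addV (subV x y) (subV y z).
Proof.
  vsurj x; vsurj y; vsurj z. rewrite !subV_mk by auto. rewrite addV_mk by (apply summable_sub; auto).
  apply MK. apply summable_sub; auto. apply summable_addrep; apply summable_sub; auto.
  intros E T M l HT Hl.
  destruct (sum_exists T M w Hw HT) as [lx Hx]. destruct (sum_exists T M w0 Hw0 HT) as [ly Hy].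
  destruct (sum_exists T M w1 Hw1 HT) as [lz Hz].
  rewrite (has_sum_unique _ _ _ Hl (hs_sub T _ _ _ _ (proj1 HT) Hx Hz)).
  rewrite (sub_add lx ly lz). apply hs_addrep; apply hs_sub; auto; apply HT.
Qed.

Lemma V_tri {X Y : BanachSpace} (x y z : Vcar X Y) : normV (subV x z) <= normV (subV x y) + normV (subV y z).
Proof. rewrite (V_subadd x y z). apply V_normD. Qed.

Lemma V_sub_sym {X Y : BanachSpace} (x y : Vcar X Y) : normV (subV x y) = normV (subV y x).
Proof.
  assert (subV y x = scalV (Copp Cone) (subV x y)).
  { vsurj x; vsurj y. rewrite !subV_mk by auto. rewrite scalV_mk by (apply summable_sub; auto).
    apply MK. apply summable_sub; auto. apply summable_scalrep, summable_sub; auto.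
    intros E T M l HT Hl.
    destruct (sum_exists T M w Hw HT) as [lx Hx]. destruct (sum_exists T M w0 Hw0 HT) as [ly Hy].
    rewrite (has_sum_unique _ _ _ Hl (hs_sub T _ _ _ _ (proj1 HT) Hy Hx)).
    rewrite sub_opp, opp_scal. apply hs_scalrep. apply HT. apply hs_sub; auto; apply HT. }
  rewrite H, V_normZ, Cmodm1. ring.
Qed.

Lemma V_subsub {X Y : BanachSpace} (v a c : Vcar X Y) : subV (subV v a) c = subV v (addV a c).
Proof.
  vsurj v; vsurj a; vsurj c. rewrite addV_mk by auto. rewrite !subV_mk by (try apply summable_sub; try apply summable_addrep; auto).
  apply MK. apply summable_sub; auto. apply summable_sub; auto.
  apply summable_sub; auto. apply summable_addrep; auto.
  intros E T M l HT Hl.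
  destruct (sum_exists T M w Hw HT) as [lv Hv]. destruct (sum_exists T M w0 Hw0 HT) as [la Ha].
  destruct (sum_exists T M w1 Hw1 HT) as [lc Hc].
  rewrite (has_sum_unique _ _ _ Hl (hs_sub T _ _ _ _ (proj1 HT) (hs_sub T _ _ _ _ (proj1 HT) Hv Ha) Hc)).
  replace (bs_sub (bs_sub lv la) lc) with (bs_sub lv (bs_add la lc)).
  apply hs_sub. apply HT. auto. apply hs_addrep; auto.
  unfold bs_sub. rewrite oppD, bs_addA. auto.
Qed.

Lemma trunc_tail_eq {X Y : BanachSpace} n (w : rep X Y) : w = addrep (rtrunc n w) (rtail n w).
Proof.
  apply functional_extensionality; intro k. unfold addrep, rtrunc, rtail.
  destruct (Nat.ltb k n); simpl; auto. rewrite app_nil_r; auto.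
Qed.

Lemma V_trunc_tail {X Y : BanachSpace} n (w : rep X Y) : summable w ->
  subV (mkV w) (mkV (rtrunc n w)) = mkV (rtail n w).
Proof.
  intro Hs. rewrite subV_mk by (try apply summable_trunc; auto).
  apply MK. apply summable_sub; auto; apply summable_trunc; auto. apply summable_tail; auto.
  intros E T M l HT Hl.
  destruct (sum_exists T M _ (summable_trunc n w Hs) HT) as [l1 H1].
  destruct (sum_exists T M _ (summable_tail n w Hs) HT) as [l2 H2].
  assert (Hw : has_sum (sumT T w) (bs_add l1 l2)). { rewrite (trunc_tail_eq n w). apply hs_addrep; auto. }
  rewrite (has_sum_unique _ _ _ Hl (hs_sub T _ _ _ _ (proj1 HT) Hw H1)).
  replace (bs_sub (bs_add l1 l2) l1) with l2; auto.
  unfold bs_sub. rewrite (bs_addC l1), <- bs_addA, bs_addN, bs_add0. auto.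
Qed.

Lemma psum_ext_lt {E : BanachSpace} (f g : nat -> E) n : (forall k, (k < n)%nat -> f k = g k) -> psum f n = psum g n.
Proof. intro H. induction n; simpl; auto. rewrite IHn, H; auto. Qed.

Lemma hs_trunc {X Y E : BanachSpace} (T : X -> Y -> E) n (w : rep X Y) :
  has_sum (sumT T (rtrunc n w)) (psum (sumT T w) n).
Proof.
  replace (psum (sumT T w) n) with (psum (sumT T (rtrunc n w)) n).
  apply has_sum_finite. intros k Hk. unfold sumT, rtrunc. replace (Nat.ltb k n) with false. reflexivity.
  symmetry. apply Nat.ltb_ge; auto.
  apply psum_ext_lt. intros k Hk. unfold sumT, rtrunc. replace (Nat.ltb k n) with true; auto.
  symmetry. apply Nat.ltb_lt; auto.
Qed.

Fixpoint fl {X Y : BanachSpace} (w : rep X Y) (n : nat) : list (X * Y) :=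
  match n with O => nil | S n => fl w n ++ w n end.

Lemma lsum_fl {X Y E : BanachSpace} (T : X -> Y -> E) (w : rep X Y) n : lsum T (fl w n) = psum (sumT T w) n.
Proof. induction n; simpl; auto. rewrite lsum_app, IHn; auto. Qed.

Lemma lcost_fl {X Y : BanachSpace} (w : rep X Y) n : lcost (fl w n) = pcost w n.
Proof. induction n; simpl; auto. rewrite lcost_app, IHn; auto. Qed.

Lemma V_blk_fl {X Y : BanachSpace} (w : rep X Y) n : summable w -> mkV (blk (fl w n)) = mkV (rtrunc n w).
Proof.
  intro Hs. apply MK. apply summable_blk. apply summable_trunc; auto.
  intros E T M l HT Hl. rewrite (has_sum_unique _ _ _ Hl (hs_blk T _)). rewrite lsum_fl. apply hs_trunc.
Qed.

Lemma V_trunc_S {X Y : BanachSpace} (w : rep X Y) K : summable w ->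
  mkV (rtrunc (S K) w) = addV (mkV (rtrunc K w)) (mkV (blk (w K))).
Proof.
  intro Hs. rewrite addV_mk by (try apply summable_trunc; try apply summable_blk; auto).
  apply MK. apply summable_trunc; auto. apply summable_addrep. apply summable_trunc; auto. apply summable_blk.
  intros E T M l HT Hl. rewrite (has_sum_unique _ _ _ Hl (hs_trunc T _ _)). simpl.
  apply hs_addrep. apply hs_trunc. apply hs_blk.
Qed.

Lemma pcost_tail {X Y : BanachSpace} (w : rep X Y) N n : pcost (rtail N w) n = pcost w (max n N) - pcost w N.
Proof.
  induction n. unfold pcost. simpl rsum at 1. replace (max 0 N) with N by lia. ring.
  unfold pcost in *.
  replace (max (S n) N) with (if Nat.ltb n N then N else S n) by (destruct (Nat.ltb_spec n N); lia).
  simpl rsum at 1. rewrite IHn. unfold rtail. destruct (Nat.ltb_spec n N).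
  - replace (max n N) with N by lia. change (lcost (@nil (X*Y))) with 0. ring.
  - replace (max n N) with n by lia. simpl rsum. ring.
Qed.

Lemma pcost_mono {X Y : BanachSpace} (w : rep X Y) n m : (n <= m)%nat -> pcost w n <= pcost w m.
Proof. intro. apply rsum_mono; auto. intro; apply lcost_nonneg. Qed.

Lemma EX {X Y : BanachSpace} (v : Vcar X Y) eps : 0 < eps ->
  exists l, lcost l <= normV v + eps /\ normV (subV v (mkV (blk l))) <= eps.
Proof.
  intro He. destruct (N2 v (eps/2)) as [w [Hs [<- Hc]]]. lra.
  destruct (rsum_tail_small (fun k => lcost (w k)) _ (fun k => lcost_nonneg _) Hc (eps/2)) as [N HN]. lra.
  exists (fl w N). split. rewrite lcost_fl. specialize (Hc N). lra.
  rewrite V_blk_fl, V_trunc_tail by auto. apply N1. apply summable_tail; auto.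
  intro n. rewrite pcost_tail. specialize (HN N (max n N) (le_n _) ltac:(lia)). unfold pcost. lra.
Qed.

Definition hh (k : nat) : R := (/2) ^ k.
Lemma hh_pos k : 0 < hh k.
Proof. unfold hh. apply pow_lt. lra. Qed.
Lemma hh_S k : hh (S k) = hh k / 2.
Proof. unfold hh. simpl. field. Qed.

Lemma geo_tail N n : rsum (fun k => if Nat.ltb k N then 0 else hh k) n <= 2 * hh N - 2 * hh (max n N).
Proof.
  induction n. simpl. replace (max 0 N) with N by lia. lra.
  simpl rsum. destruct (Nat.ltb_spec n N).
  - replace (max (S n) N) with N by lia. replace (max n N) with N in IHn by lia. lra.
  - replace (max (S n) N) with (S n) by lia. replace (max n N) with n in IHn by lia.
    rewrite hh_S. lra.
Qed.

Lemma TB {X Y : BanachSpace} (w : rep X Y) N c : 0 <= c -> (forall k, (N <= k)%nat -> lcost (w k) <= c * hh k) ->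
  forall n, pcost (rtail N w) n <= 2 * c * hh N.
Proof.
  intros Hc H n. unfold pcost. eapply Rle_trans.
  apply rsum_le with (b := fun k => c * (if Nat.ltb k N then 0 else hh k)).
  intro k. unfold rtail. destruct (Nat.ltb_spec k N). simpl. lra. apply H; auto.
  rewrite rsum_scal. pose proof (geo_tail N n). pose proof (hh_pos (max n N)).
  assert (c * rsum (fun k => if Nat.ltb k N then 0 else hh k) n <= c * (2 * hh N)).
  { apply Rmult_le_compat_l; auto. lra. } lra.
Qed.

Fixpoint mmax (Nf : nat -> nat) (k : nat) : nat :=
  match k with O => Nf O | S k => max (mmax Nf k) (Nf (S k)) end.

Lemma mmax_ge Nf k : (Nf k <= mmax Nf k)%nat.
Proof. destruct k; simpl; lia. Qed.
Lemma mmax_S Nf k : (mmax Nf k <= mmax Nf (S k))%nat.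
Proof. simpl; lia. Qed.

Fixpoint aa {X Y : BanachSpace} (F : nat -> Vcar X Y -> list (X * Y)) (K : nat) : Vcar X Y :=
  match K with O => zeroV | S K => addV (aa F K) (mkV (blk (F K (aa F K)))) end.

Lemma V_complete {X Y : BanachSpace} (u : nat -> Vcar X Y) :
  (forall eps, 0 < eps -> exists N, forall n m, (N <= n)%nat -> (N <= m)%nat -> normV (addV (u n) (oppV (u m))) < eps) ->
  exists l, forall eps, 0 < eps -> exists N, forall n, (N <= n)%nat -> normV (addV (u n) (oppV l)) < eps.
Proof.
  intros Hc.
  set (Nf := fun k => proj1_sig (constructive_indefinite_description _ (Hc _ (hh_pos k)))).
  assert (HNf : forall k n m, (Nf k <= n)%nat -> (Nf k <= m)%nat -> normV (subV (u n) (u m)) < hh k).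
  { intro k. unfold Nf. destruct (constructive_indefinite_description _ _) as [N HN]; simpl. exact HN. }
  set (mm := mmax Nf).
  set (F := fun K a => proj1_sig (constructive_indefinite_description _ (EX (subV (u (mm K)) a) (hh K) (hh_pos K)))).
  assert (FS : forall K a, lcost (F K a) <= normV (subV (u (mm K)) a) + hh K /\
                normV (subV (subV (u (mm K)) a) (mkV (blk (F K a)))) <= hh K).
  { intros K a. unfold F. destruct (constructive_indefinite_description _ _) as [l Hl]; simpl. exact Hl. }
  set (W := fun k => F k (aa F k)).
  assert (f2 : forall K, normV (subV (u (mm K)) (aa F (S K))) <= hh K).
  { intro K. simpl. rewrite <- V_subsub. apply FS. }
  assert (f4 : forall K, lcost (W (S K)) <= 5 * hh (S K)).
  { intro K. unfold W. destruct (FS (S K) (aa F (S K))) as [H1 _].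
    pose proof (V_tri (u (mm (S K))) (u (mm K)) (aa F (S K))).
    assert (normV (subV (u (mm (S K))) (u (mm K))) < hh K).
    { apply HNf. pose proof (mmax_ge Nf K). pose proof (mmax_S Nf K). unfold mm. lia. unfold mm. apply mmax_ge. }
    pose proof (f2 K). rewrite hh_S in *. lra. }
  assert (HWs : summable W).
  { exists (lcost (W O) + 2 * 5 * hh 1). intro n.
    apply Rle_trans with (pcost W (max n 1)). apply pcost_mono; lia.
    pose proof (pcost_tail W 1 n) as E.
    assert (pcost W (max n 1) = pcost (rtail 1 W) n + lcost (W O)).
    { rewrite E. unfold pcost. simpl. ring. }
    rewrite H. pose proof (TB W 1 5 ltac:(lra) (fun k Hk => match k as k' return (1 <= k')%nat -> lcost (W k') <= 5 * hh k' with
                                                          | O => fun H => ltac:(lia)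
                                                          | S k => fun _ => f4 k end Hk) n). lra. }
  assert (f6 : forall K, mkV (rtrunc K W) = aa F K).
  { induction K. simpl. unfold zeroV. f_equal.
    rewrite V_trunc_S by auto. rewrite IHK. reflexivity. }
  set (Lim := mkV W). exists Lim.
  assert (f7 : forall K, normV (subV (aa F (S K)) Lim) <= 5 * hh K).
  { intro K. rewrite V_sub_sym. unfold Lim. rewrite <- f6, V_trunc_tail by auto.
    apply N1. apply summable_tail; auto. intro n.
    eapply Rle_trans. apply (TB W (S K) 5). lra.
    intros [|k] Hk. lia. apply f4. rewrite hh_S. lra. }
  intros eps He.
  destruct (pow_lt_1_zero (/2) ltac:(rewrite Rabs_right; lra) (eps / 8) ltac:(lra)) as [K HK].
  specialize (HK K (le_n _)). rewrite Rabs_right in HK by (apply Rle_ge, pow_le; lra).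
  exists (mm K). intros n Hn. fold (subV (u n) Lim).
  pose proof (V_tri (u n) (u (mm K)) Lim).
  pose proof (V_tri (u (mm K)) (aa F (S K)) Lim).
  assert (normV (subV (u n) (u (mm K))) < hh K).
  { apply HNf. pose proof (mmax_ge Nf K). unfold mm in *. lia. unfold mm; apply mmax_ge. }
  pose proof (f2 K). pose proof (f7 K). unfold hh in *. lra.
Qed.


Definition TBS (X Y : BanachSpace) : BanachSpace :=
  @mkBS (Vcar X Y) zeroV addV oppV scalV normV V_addA V_addC V_add0 V_addN V_scalA V_scal1
    V_scalDr V_scalDl V_norm_eq0 V_normZ V_normD V_complete.

Definition tQ {X Y : BanachSpace} (x : X) (y : Y) : TBS X Y := mkV (blk ((x, y) :: nil)).

Lemma lsum1 {X Y E : BanachSpace} (T : X -> Y -> E) x y : lsum T ((x, y) :: nil) = T x y.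
Proof. unfold lsum; simpl. apply bs_add0. Qed.

Lemma tQ_bilinear {X Y : BanachSpace} : is_bilinear (@tQ X Y).
Proof.
  split; [|split; [|split]].
  - intros x x' y. unfold tQ. simpl. rewrite addV_mk by apply summable_blk.
    apply MK_pt. apply summable_blk. apply summable_addrep; apply summable_blk.
    intros E T M [HT _] [|k]; unfold sumT, addrep, blk; simpl; [|reflexivity].
    change (lsum T ((bs_add x x', y) :: nil) = lsum T ((x, y) :: (x', y) :: nil)).
    rewrite lsum1. unfold lsum; simpl. rewrite bs_add0. apply HT.
  - intros a x y. unfold tQ. simpl. rewrite scalV_mk by apply summable_blk. f_equal.
    apply functional_extensionality. intros [|k]; reflexivity.
  - intros x y y'. unfold tQ. simpl. rewrite addV_mk by apply summable_blk.
    apply MK_pt. apply summable_blk. apply summable_addrep; apply summable_blk.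
    intros E T M [HT _] [|k]; unfold sumT, addrep, blk; simpl; [|reflexivity].
    change (lsum T ((x, bs_add y y') :: nil) = lsum T ((x, y) :: (x, y') :: nil)).
    rewrite lsum1. unfold lsum; simpl. rewrite bs_add0. apply HT.
  - intros a x y. unfold tQ. simpl. rewrite scalV_mk by apply summable_blk.
    apply MK_pt. apply summable_blk. apply summable_scalrep; apply summable_blk.
    intros E T M [HT _] [|k]; unfold sumT, scalrep, blk; simpl; [|reflexivity].
    change (lsum T ((x, bs_scal a y) :: nil) = lsum T ((bs_scal a x, y) :: nil)).
    rewrite !lsum1. destruct HT as [_ [H2 [_ H4]]]. rewrite H2, H4. auto.
Qed.

Lemma tQ_norm {X Y : BanachSpace} (x : X) (y : Y) : bs_norm (tQ x y) <= bs_norm x * bs_norm y.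
Proof.
  simpl. unfold tQ. apply N1. apply summable_blk. intro n. eapply Rle_trans. apply pcost_blk.
  unfold lcost; simpl. lra.
Qed.

Definition Lmap {X Y E : BanachSpace} (T : X -> Y -> E) (S : Vcar X Y) : E :=
  epsilon (inhabits bs_zero) (fun l => has_sum (sumT T (repV S)) l).

Lemma L_mk {X Y E : BanachSpace} (T : X -> Y -> E) M (w : rep X Y) l :
  bil_bnd T M -> summable w -> has_sum (sumT T w) l -> Lmap T (mkV w) = l.
Proof.
  intros HT Hs Hl. pose proof (sum_repV w T M l Hs HT Hl) as H1.
  assert (H2 : has_sum (sumT T (repV (mkV w))) (Lmap T (mkV w))).
  { unfold Lmap. apply epsilon_spec. exists l; auto. }
  eapply has_sum_unique; eauto.
Qed.

Lemma lcost_zero {X Y : BanachSpace} (l : list (X * Y)) : (forall (x : X) (y : Y), bs_norm x * bs_norm y = 0) -> lcost l = 0.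
Proof. intro H. unfold lcost. induction l; simpl; auto. rewrite IHl, H. ring. Qed.

Lemma blk_nil {X Y : BanachSpace} : mkV (blk (@nil (X * Y))) = zeroV.
Proof. unfold zeroV. f_equal. apply functional_extensionality. intros [|k]; reflexivity. Qed.

Lemma blk_cons {X Y : BanachSpace} (p : X * Y) l :
  mkV (blk (p :: l)) = addV (mkV (blk (p :: nil))) (mkV (blk l)).
Proof.
  rewrite addV_mk by apply summable_blk. f_equal. apply functional_extensionality. intros [|k]; reflexivity.
Qed.

Lemma tQ_universal {X Y : BanachSpace} : is_proj_tensor X Y (TBS X Y) tQ.
Proof.
  split. apply tQ_bilinear. split. apply tQ_norm.
  intros E T M HT HM. assert (HB : bil_bnd T M) by (split; auto).
  exists (Lmap T).
  assert (Hlin : is_linear (Lmap T : TBS X Y -> E)).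
  { split.
    - intros S1 S2. simpl. vsurj S1. vsurj S2. rewrite addV_mk by auto.
      destruct (sum_exists T M w Hw HB) as [l1 H1]. destruct (sum_exists T M w0 Hw0 HB) as [l2 H2].
      rewrite (L_mk T M w l1), (L_mk T M w0 l2) by auto. apply (L_mk T M); auto. apply summable_addrep; auto.
      apply hs_addrep; auto.
    - intros a S. simpl. vsurj S. rewrite scalV_mk by auto.
      destruct (sum_exists T M w Hw HB) as [l1 H1].
      rewrite (L_mk T M w l1) by auto. apply (L_mk T M); auto. apply summable_scalrep; auto.
      apply hs_scalrep; auto. }
  split; auto. split; [|split].
  -
    intro z. simpl in z |- *. vsurj z.
    destruct (Rle_dec 0 M) as [HM0|HM0].
    + apply le_eps. intros eps He.
      assert (He' : 0 < eps / (M + 1)) by (apply Rdiv_lt_0_compat; lra).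
      destruct (N2 (mkV w) _ He') as [w' [Hs' [Heq Hc]]]. rewrite <- Heq.
      destruct (sum_exists T M w' Hs' HB) as [l Hl]. rewrite (L_mk T M w' l) by auto.
      rewrite Heq. eapply Rle_trans. apply (sum_bound T M w' l _ HB Hl Hc).
      rewrite Rabs_right by lra. rewrite Rmult_plus_distr_l.
      assert (M * (eps / (M + 1)) <= eps).
      { unfold Rdiv. rewrite <- Rmult_assoc. apply (Rmult_le_reg_r (M + 1)). lra.
        rewrite Rmult_assoc, Rinv_l by lra. nra. }
      lra.
    + assert (H0 : forall (x : X) (y : Y), bs_norm x * bs_norm y = 0).
      { intros x y. specialize (HM x y). pose proof (norm_nonneg (T x y)).
        pose proof (Rmult_le_pos _ _ (norm_nonneg x) (norm_nonneg y)). nra. }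
      assert (Hc : forall n, pcost w n <= 0).
      { intro n. unfold pcost. rewrite (rsum_ext _ (fun _ => 0)). clear. induction n; simpl; lra.
        intro; apply lcost_zero; auto. }
      destruct (sum_exists T M w Hw HB) as [l Hl]. rewrite (L_mk T M w l) by auto.
      pose proof (sum_bound T M w l 0 HB Hl Hc). pose proof (N1 w 0 Hw Hc).
      pose proof (normV_nonneg (mkV w)). pose proof (norm_nonneg l). nra.
  - intros x y. apply (L_mk T M); auto. apply summable_blk. rewrite <- (lsum1 T x y). apply hs_blk.
  - intros L' [HL' [K HK]] HLt z. simpl in z. vsurj z.
    assert (Hb : forall l, L' (mkV (blk l)) = lsum T l).
    { induction l. rewrite blk_nil. apply (lin_zero L' HL'). rewrite blk_cons.
      destruct HL' as [Ha _]. change (L' (@bs_add (TBS X Y) (mkV (blk (a :: nil))) (mkV (blk l))) = lsum T (a :: l)).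
      rewrite Ha, IHl. destruct a as [x y]. change (bs_add (L' (tQ x y)) (lsum T l) = bs_add (T x y) (lsum T l)).
      rewrite HLt; auto. }
    assert (Ht : forall n, L' (mkV (rtrunc n w)) = psum (sumT T w) n).
    { induction n. replace (rtrunc 0 w) with (@zrep X Y). apply (lin_zero L' HL').
      apply functional_extensionality; intro k; reflexivity.
      rewrite V_trunc_S by auto. destruct HL' as [Ha _].
      change (L' (@bs_add (TBS X Y) (mkV (rtrunc n w)) (mkV (blk (w n)))) = psum (sumT T w) (S n)).
      rewrite Ha, IHn, Hb. reflexivity. }
    destruct (sum_exists T M w Hw HB) as [l Hl]. rewrite (L_mk T M w l) by auto.
    apply (has_sum_unique (sumT T w)); auto.
    intros eps He. destruct Hw as [C HC].
    assert (He' : 0 < eps / (2 * (Rabs K + 1))) by (apply Rdiv_lt_0_compat; pose proof (Rabs_pos K); lra).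
    destruct (rsum_tail_small (fun k => lcost (w k)) C (fun k => lcost_nonneg _) HC _ He') as [N HN].
    exists N. intros n Hn. rewrite <- Ht.
    rewrite norm_sub_sym. rewrite <- (lin_sub L') by auto.
    change (@bs_sub (TBS X Y) (mkV w) (mkV (rtrunc n w))) with (subV (mkV w) (mkV (rtrunc n w))).
    rewrite V_trunc_tail by (exists C; auto).
    eapply Rle_lt_trans. apply HK. simpl.
    assert (normV (mkV (rtail n w)) <= eps / (2 * (Rabs K + 1))).
    { apply N1. apply summable_tail. exists C; auto. intro m. rewrite pcost_tail.
      specialize (HN n (max m n) Hn ltac:(lia)). unfold pcost. lra. }
    pose proof (normV_nonneg (mkV (rtail n w))). pose proof (Rabs_pos K).
    assert (K * normV (mkV (rtail n w)) <= (Rabs K + 1) * normV (mkV (rtail n w))).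
    { apply Rmult_le_compat_r; auto. pose proof (Rle_abs K). lra. }
    assert ((Rabs K + 1) * normV (mkV (rtail n w)) <= (Rabs K + 1) * (eps / (2 * (Rabs K + 1)))).
    { apply Rmult_le_compat_l; lra. }
    replace ((Rabs K + 1) * (eps / (2 * (Rabs K + 1)))) with (eps / 2) in H3 by (field; lra).
    lra.
Qed.

Lemma proj_tensor_exists (X Y : BanachSpace) : exists (P : BanachSpace) (t : X -> Y -> P), is_proj_tensor X Y P t.
Proof. exists (TBS X Y), tQ. apply tQ_universal. Qed.

Lemma bl_comp {X Y Z : BanachSpace} (f : X -> Y) (g : Y -> Z) :
  bounded_linear f -> bounded_linear g -> bounded_linear (fun x => g (f x)).
Proof.
  intros [[Hf1 Hf2] [Kf HKf]] [[Hg1 Hg2] [Kg HKg]]. split. split.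
  intros; rewrite Hf1, Hg1; auto. intros; rewrite Hf2, Hg2; auto.
  exists (Rabs Kg * Rabs Kf). intro x.
  eapply Rle_trans. apply HKg. pose proof (norm_nonneg (f x)). pose proof (norm_nonneg x).
  assert (Kg * bs_norm (f x) <= Rabs Kg * bs_norm (f x)) by (apply Rmult_le_compat_r; auto; apply Rle_abs).
  assert (bs_norm (f x) <= Rabs Kf * bs_norm x).
  { eapply Rle_trans. apply HKf. apply Rmult_le_compat_r; auto; apply Rle_abs. }
  assert (Rabs Kg * bs_norm (f x) <= Rabs Kg * (Rabs Kf * bs_norm x)) by (apply Rmult_le_compat_l; auto; apply Rabs_pos).
  nra.
Qed.

Lemma bl_abs {X Y : BanachSpace} (f : X -> Y) : bounded_linear f -> exists K, 0 <= K /\ forall x, bs_norm (f x) <= K * bs_norm x.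
Proof.
  intros [_ [K HK]]. exists (Rabs K). split. apply Rabs_pos. intro x. eapply Rle_trans. apply HK.
  apply Rmult_le_compat_r. apply norm_nonneg. apply Rle_abs.
Qed.

Lemma unique_ext {X Y P E : BanachSpace} (t : X -> Y -> P) (L1 L2 : P -> E) :
  is_proj_tensor X Y P t -> bounded_linear L1 -> bounded_linear L2 ->
  (forall x y, L1 (t x y) = L2 (t x y)) -> forall z, L1 z = L2 z.
Proof.
  intros [[Ht1 [Ht2 [Ht3 Ht4]]] [Htn Hu]] H1 H2 Heq.
  destruct (bl_abs L1 H1) as [K [HK0 HK]].
  destruct (Hu E (fun x y => L1 (t x y)) K) as [L [_ [_ [HLt HLu]]]].
  { destruct H1 as [[Ha Hs] _]. split; [|split; [|split]]; intros.
    rewrite Ht1, Ha; auto. rewrite Ht2, Hs; auto. rewrite Ht3, Ha; auto. rewrite Ht4, Hs; auto. }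
  { intros x y. eapply Rle_trans. apply HK. apply Rmult_le_compat_l; auto. }
  intro z. rewrite (HLu L1 H1 (fun x y => eq_refl) z). symmetry. apply HLu; auto.
Qed.

Lemma proj_tensor_map {X Y P E : BanachSpace} (t : X -> Y -> P) (T : X -> Y -> E) M :
  is_proj_tensor X Y P t -> is_bilinear T -> (forall x y, bs_norm (T x y) <= M * (bs_norm x * bs_norm y)) ->
  exists L : P -> E, bounded_linear L /\ (forall z, bs_norm (L z) <= M * bs_norm z) /\ forall x y, L (t x y) = T x y.
Proof.
  intros [_ [_ Hu]] HT HM. destruct (Hu E T M HT HM) as [L [Hl [Hb [Ht _]]]].
  exists L. split; [split; auto; exists M; auto|split; auto].
Qed.

Lemma tens_pi_spec {C : BanachAlgebra} {Q : BanachSpace} (t : C -> C -> Q) :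
  is_proj_tensor C C Q t -> bounded_linear (tens_pi t) /\ forall x y, tens_pi t (t x y) = ba_mul x y.
Proof.
  intro H. unfold tens_pi. apply epsilon_spec.
  destruct (proj_tensor_map t (fun x y => ba_mul x y) 1 H) as [L [HL [_ HLt]]].
  - split; [|split; [|split]]; intros. apply ba_mulDl. symmetry; apply ba_scal_mull.
    apply ba_mulDr. symmetry; apply ba_scal_mulr.
  - intros. rewrite Rmult_1_l. apply ba_normM.
  - exists L. auto.
Qed.

Lemma tens_lact_spec {C : BanachAlgebra} {Q : BanachSpace} (t : C -> C -> Q) (c : C) :
  is_proj_tensor C C Q t -> bounded_linear (tens_lact t c) /\ forall x y, tens_lact t c (t x y) = t (ba_mul c x) y.
Proof.
  intro H. unfold tens_lact. apply epsilon_spec.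
  pose proof H as [[Ht1 [Ht2 [Ht3 Ht4]]] [Htn _]].
  destruct (proj_tensor_map t (fun x y => t (ba_mul c x) y) (bs_norm c) H) as [L [HL [_ HLt]]].
  - split; [|split; [|split]]; intros.
    rewrite ba_mulDr; auto. rewrite <- ba_scal_mulr; auto. auto. auto.
  - intros. eapply Rle_trans. apply Htn. pose proof (norm_nonneg y).
    rewrite <- Rmult_assoc. apply Rmult_le_compat_r; auto. apply ba_normM.
  - exists L. auto.
Qed.

Lemma net_le {I : DirectedSet} (f g : I -> R) : net_to0 f -> (forall i, Rabs (g i) <= Rabs (f i)) -> net_to0 g.
Proof.
  intros H Hle eps He. destruct (H eps He) as [i0 Hi0]. exists i0. intros i Hi.
  eapply Rle_lt_trans. apply Hle. auto.
Qed.

Lemma net_ext {I : DirectedSet} (f g : I -> R) : net_to0 f -> (forall i, g i = f i) -> net_to0 g.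
Proof. intros H E. apply (net_le f g H). intro i; rewrite E; lra. Qed.

Theorem theorem2p9 (A B P : BanachAlgebra) (t : A -> B -> P)
    (phi : A -> Cx) (psi : B -> Cx) (chi : P -> Cx) :
  is_proj_tensor_alg A B P t ->
  is_character A phi ->
  is_character B psi ->
  is_character P chi ->
  (forall a b, chi (t a b) = Cmul (phi a) (psi b)) ->
  (exists e : A, forall a : A, ba_mul e a = a /\ ba_mul a e = a) ->
  (exists x0 : B, ba_mul x0 x0 = x0 /\ psi x0 = Cone) ->
  approx_left_biproj P chi ->
  approx_left_biproj A phi.
Proof.
  intros [Ptens Pmul] Hphi Hpsi Hchi Hchit _ [x0 [Hx0 Hpx0]] Hbip Q tA HQ.
  pose proof (char_bounded A phi Hphi) as Bphi.
  pose proof (char_bounded B psi Hpsi) as Bpsi.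
  pose proof (char_bounded P chi Hchi) as Bchi.
  pose proof Hphi as [phiD [phiZ [phiM [a1 Ha1]]]].
  pose proof Hpsi as [psiD [psiZ [psiM _]]].
  pose proof Hchi as [chiD [chiZ [chiM _]]].
  pose proof Ptens as [[Pt1 [Pt2 [Pt3 Pt4]]] [Ptn _]].
  destruct (proj_tensor_map t (fun a b => bs_scal (psi b) a) 1 Ptens) as [S [HS [HSb HSt]]].
  { split; [|split; [|split]]; intros.
    apply bs_scalDr. rewrite <- !bs_scalA, Cmul_comm; auto.
    rewrite psiD; apply bs_scalDl. rewrite psiZ, bs_scalA; auto. }
  { intros a b. rewrite bs_normZ. pose proof (Bpsi b). pose proof (norm_nonneg a).
    pose proof (Cmod_nonneg (psi b)). nra. }
  pose proof HS as [[HSa HSs] _].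
  assert (E1 : forall p q, S (ba_mul p q) = ba_mul (S p) (S q)).
  { assert (E1a : forall c d p, S (ba_mul p (t c d)) = ba_mul (S p) (S (t c d))).
    { intros c d. apply (unique_ext t (fun p => S (ba_mul p (t c d))) (fun p => ba_mul (S p) (S (t c d))) Ptens).
      apply (bl_comp (fun p => ba_mul p (t c d)) S). apply rmul_bounded. auto.
      apply (bl_comp S (fun p => ba_mul p (S (t c d)))). auto. apply rmul_bounded.
      intros a b. rewrite Pmul, !HSt, psiM. rewrite <- ba_scal_mull, <- ba_scal_mulr, bs_scalA.
      auto. }
    intros p. apply (unique_ext t (fun q => S (ba_mul p q)) (fun q => ba_mul (S p) (S q)) Ptens).
    apply (bl_comp (fun q => ba_mul p q) S). apply lmul_bounded. auto.
    apply (bl_comp S (fun q => ba_mul (S p) q)). auto. apply lmul_bounded.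
    intros; apply E1a. }
  assert (E3 : forall p, phi (S p) = chi p).
  { assert (H : forall p, bs_scal (phi (S p)) a1 = bs_scal (chi p) a1).
    { apply (unique_ext t (fun p => bs_scal (phi (S p)) a1) (fun p => bs_scal (chi p) a1) Ptens).
      - split. split. intros. rewrite HSa, phiD, bs_scalDl; auto. intros. rewrite HSs, phiZ, bs_scalA; auto.
        exists (bs_norm a1). intro x. rewrite bs_normZ. pose proof (Bphi (S x)). pose proof (HSb x).
        pose proof (norm_nonneg a1). pose proof (Cmod_nonneg (phi (S x))). nra.
      - split. split. intros. rewrite chiD, bs_scalDl; auto. intros. rewrite chiZ, bs_scalA; auto.
        exists (bs_norm a1). intro x. rewrite bs_normZ. pose proof (Bchi x).
        pose proof (norm_nonneg a1). pose proof (Cmod_nonneg (chi x)). nra.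
      - intros a b. rewrite HSt, phiZ, Hchit, Cmul_comm. auto. }
    intro p. specialize (H p). apply (f_equal phi) in H. rewrite !phiZ in H.
    eapply Cmul_cancel_r; eauto. }
  pose proof (tQ_universal (X := P) (Y := P)) as HQ'.
  destruct (Hbip (TBS P P) tQ HQ') as [I [rho [Hrho [C1 [C2 C3]]]]].
  pose proof HQ as [[Qt1 [Qt2 [Qt3 Qt4]]] [Qtn _]].
  destruct (proj_tensor_map tQ (fun p q => tA (S p) (S q)) 1 HQ') as [th [Hth [Hthb Htht]]].
  { split; [|split; [|split]]; intros.
    rewrite HSa, Qt1; auto. rewrite HSs, Qt2; auto. rewrite HSa, Qt3; auto. rewrite HSs, Qt4; auto. }
  { intros p q. eapply Rle_trans. apply Qtn. pose proof (HSb p). pose proof (HSb q).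
    pose proof (norm_nonneg (S p)). pose proof (norm_nonneg (S q)). nra. }
  pose proof Hth as [Hthl _].
  destruct (tens_pi_spec tA HQ) as [HpiA HpiAt].
  destruct (tens_pi_spec (C := P) tQ HQ') as [HpiP HpiPt].
  assert (E2 : forall w, tens_pi tA (th w) = S (tens_pi tQ w)).
  { apply (unique_ext tQ (fun w => tens_pi tA (th w)) (fun w => S (tens_pi tQ w)) HQ').
    apply bl_comp; auto. apply bl_comp; auto.
    intros p q. rewrite Htht, HpiAt, HpiPt, E1. auto. }
  assert (E4 : forall c w, th (tens_lact tQ (t c x0) w) = tens_lact tA c (th w)).
  { intro c. destruct (tens_lact_spec (C := P) tQ (t c x0) HQ') as [Hl1 Hl2].
    destruct (tens_lact_spec tA c HQ) as [Hl3 Hl4].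
    apply (unique_ext tQ _ _ HQ').
    apply (bl_comp _ th); auto. apply (bl_comp th); auto.
    intros p q. rewrite Hl2, !Htht, Hl4, E1, HSt, Hpx0, bs_scal1. auto. }
  exists I, (fun i x => th (rho i (t x x0))).
  split; [|split; [|split]].
  - intro i. apply bl_comp. apply bl_comp.
    split. split. intros; apply Pt1. intros; apply Pt2. exists (bs_norm x0). intro x.
    rewrite Rmult_comm. apply Ptn. auto. auto.
  - intros c x. apply (net_le _ _ (C1 (t c x0) (t x x0))). intro i.
    rewrite <- E4, <- (lin_sub th) by auto. rewrite Pmul, Hx0.
    rewrite !Rabs_right by (apply Rle_ge, norm_nonneg). eapply Rle_trans. apply Hthb. lra.
  - intros c x. apply (net_le _ _ (C2 (t c x0) (t x x0))). intro i.
    rewrite Pmul, Hx0, Hchit, Hpx0, Cmul_1_r.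
    pose proof Hthl as [_ Hths]. rewrite <- Hths, <- (lin_sub th) by auto.
    rewrite !Rabs_right by (apply Rle_ge, norm_nonneg). eapply Rle_trans. apply Hthb. lra.
  - intros x. apply (net_ext _ _ (C3 (t x x0))). intro i.
    rewrite E2, E3, Hchit, Hpx0, Cmul_1_r. auto.
Qed.
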